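(* Let $p \geq 5$ and let $L$ be the Laplacian of the graph $K_p \oplus C_\infty$, regarded as a bounded operator on $l^2_c$. Then there exists $\lambda^* \in (p,p+2)$ such that the spectrum of $L$ is the union of the disjoint sets $[0,4]$ and $\{\lambda^*, p\}$, where $[0,4]$ is the essential spectrum of $L$ and $\{\lambda^*, p\}$ is the point spectrum of $L$.
   Context: The graph $K_p \oplus C_\infty$ has vertex set $\{-p+1,\ldots,0\} \cup \{1,2,3,\ldots\}$, with edges between every pair of distinct vertices in $\{-p+1,\ldots,0\}$, the edge $\{0,1\}$, and the edges $\{j,j+1\}$ for all $j \geq 1$. $l^2_c$ is the complex Hilbert space of square-summable complex functions on the vertex set. The Laplacian acts by $(Lv)_i = \deg(i)\, v_i - \sum_{j \sim i} v_j$. The spectrum $\sigma(L)$ is the set of $\lambda \in \mathbb{C}$ for which $L-\lambda I$ has no bounded inverse on $l^2_c$; the point spectrum is the set of $\lambda$ with $Lv = \lambda v$ for some nonzero $v \in l^2_c$; the essential spectrum is the set of $\lambda \in \sigma(L)$ such that $L - \lambda I$ either is not Fredholm, or is Fredholm with nonzero index. *)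

(* Defs.v *)
From Stdlib Require Import Reals ZArith List.
From Coquelicot Require Import Coquelicot.
Open Scope R_scope.

(** Vertices of K_p (+) C_oo are the integers -p+1, -p+2, ..., 0, 1, 2, ...
    We index them by nat: index i <-> vertex (i - (p-1)). *)
Definition vert (p i : nat) : Z := (Z.of_nat i - (Z.of_nat p - 1))%Z.

(** Adjacency of K_p (+) C_oo, in terms of the integer labels a = vert p i,
    b = vert p j: a <> b and either both a,b <= 0 (clique on {-p+1,...,0}),
    or |a-b| = 1 with min(a,b) >= 0 (edge {0,1} and edges {j,j+1}, j >= 1). *)
Definition adjb (p i j : nat) : bool :=
  if Z.eq_dec (vert p i) (vert p j) then
    false
  else
    orb (andb (Z.leb (vert p i) 0) (Z.leb (vert p j) 0))
        (Z.eqb (Z.abs (vert p i - vert p j)) 1 &&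
         Z.leb 0 (Z.min (vert p i) (vert p j)))%bool.

(** All neighbours of index i have index < nb_bound p i. *)
Definition nb_bound (p i : nat) : nat := (p + i + 2)%nat.

Definition Csum (l : list C) : C := fold_right Cplus (RtoC 0) l.

Definition deg (p i : nat) : R :=
  INR (length (filter (adjb p i) (seq 0 (nb_bound p i)))).

Definition Lap (p : nat) (v : nat -> C) : nat -> C :=
  fun i => Cminus (Cmult (RtoC (deg p i)) (v i))
                  (Csum (map v (filter (adjb p i) (seq 0 (nb_bound p i))))).

Definition l2 (v : nat -> C) : Prop := ex_series (fun n => (Cmod (v n)) ^ 2).
Definition l2norm (v : nat -> C) : R := sqrt (Series (fun n => (Cmod (v n)) ^ 2)).

Definition vzero : nat -> C := fun _ => RtoC 0.
Definition vadd (u v : nat -> C) : nat -> C := fun i => Cplus (u i) (v i).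
Definition vsub (u v : nat -> C) : nat -> C := fun i => Cminus (u i) (v i).
Definition vscale (a : C) (v : nat -> C) : nat -> C := fun i => Cmult a (v i).

Definition Op := (nat -> C) -> (nat -> C).

Definition bounded_op (T : Op) : Prop :=
  (forall v, l2 v -> l2 (T v)) /\
  (forall a u v, l2 u -> l2 v -> T (vadd (vscale a u) v) = vadd (vscale a (T u)) (T v)) /\
  (exists M : R, forall v, l2 v -> l2norm (T v) <= M * l2norm v).

Definition shift_op (A : Op) (lam : C) : Op := fun v => vsub (A v) (vscale lam v).

Definition has_bounded_inverse (A : Op) : Prop :=
  exists B : Op, bounded_op B /\
    (forall v, l2 v -> B (A v) = v) /\ (forall v, l2 v -> A (B v) = v).

Definition spectrum (A : Op) (lam : C) : Prop :=
  ~ has_bounded_inverse (shift_op A lam).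

Definition point_spectrum (A : Op) (lam : C) : Prop :=
  exists v, l2 v /\ v <> vzero /\ A v = vscale lam v.

Fixpoint lincomb (cs : list C) (ws : list (nat -> C)) : nat -> C :=
  match cs, ws with
  | c :: cs', w :: ws' => vadd (vscale c w) (lincomb cs' ws')
  | _, _ => vzero
  end.

Definition in_range (A : Op) (x : nat -> C) : Prop := exists v, l2 v /\ x = A v.

Definition closed_range (A : Op) : Prop :=
  forall (u : nat -> nat -> C) (w : nat -> C),
    (forall k, in_range A (u k)) -> l2 w ->
    is_lim_seq (fun k => l2norm (vsub (u k) w)) 0 ->
    in_range A w.

Definition dim_ker (A : Op) (m : nat) : Prop :=
  exists ws : list (nat -> C), length ws = m /\
    List.Forall (fun w => l2 w /\ A w = vzero) ws /\
    (forall cs, length cs = m -> lincomb cs ws = vzero -> List.Forall (fun c => c = RtoC 0) cs) /\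
    (forall v, l2 v -> A v = vzero -> exists cs, length cs = m /\ v = lincomb cs ws).

Definition codim_range (A : Op) (n : nat) : Prop :=
  exists ws : list (nat -> C), length ws = n /\
    List.Forall l2 ws /\
    (forall cs, length cs = n -> in_range A (lincomb cs ws) -> List.Forall (fun c => c = RtoC 0) cs) /\
    (forall x, l2 x -> exists v cs, l2 v /\ length cs = n /\ x = vadd (A v) (lincomb cs ws)).

Definition fredholm (A : Op) : Prop :=
  closed_range A /\ (exists m, dim_ker A m) /\ (exists n, codim_range A n).

Definition fredholm_index (A : Op) (k : Z) : Prop :=
  fredholm A /\ exists m n, dim_ker A m /\ codim_range A n /\ k = (Z.of_nat m - Z.of_nat n)%Z.

Definition essential_spectrum (A : Op) (lam : C) : Prop :=
  spectrum A lam /\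
  (~ fredholm (shift_op A lam) \/
   (fredholm (shift_op A lam) /\ exists k, fredholm_index (shift_op A lam) k /\ k <> 0%Z)).

(* Main.v *)
Require Import Defs.
From Stdlib Require Import Reals ZArith List Lia Psatz Lra FunctionalExtensionality Classical.
From Coquelicot Require Import Coquelicot.
Open Scope R_scope.

Fixpoint psum (a : nat -> R) (n : nat) : R :=
  match n with O => 0 | S m => psum a m + a m end.

Lemma psum_sum_n (a : nat -> R) n : sum_n a n = psum a (S n).
Proof.
  induction n.
  - simpl. rewrite sum_O. lra.
  - rewrite sum_Sn, IHn. simpl. unfold plus; simpl. lra.
Qed.

Lemma psum_nonneg a n : (forall k, 0 <= a k) -> 0 <= psum a n.
Proof. intros H; induction n; simpl; [lra| specialize (H n); lra]. Qed.

Lemma psum_mono a m n : (forall k, 0 <= a k) -> (m <= n)%nat -> psum a m <= psum a n.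
Proof.
  intros H Hmn; induction Hmn; [lra|]. simpl. specialize (H m0). lra.
Qed.

Lemma psum_ext a b n : (forall k, (k < n)%nat -> a k = b k) -> psum a n = psum b n.
Proof.
  induction n; intros H; simpl; auto.
  rewrite IHn by (intros; apply H; lia). rewrite H by lia. auto.
Qed.

Lemma psum_le a b n : (forall k, (k < n)%nat -> a k <= b k) -> psum a n <= psum b n.
Proof.
  induction n; intros H; simpl; [lra|].
  assert (psum a n <= psum b n) by (apply IHn; intros; apply H; lia).
  specialize (H n ltac:(lia)). lra.
Qed.

Lemma psum_plus a b n : psum (fun k => a k + b k) n = psum a n + psum b n.
Proof. induction n; simpl; lra. Qed.

Lemma psum_scal c a n : psum (fun k => c * a k) n = c * psum a n.
Proof. induction n; simpl; [lra|]. rewrite IHn. lra. Qed.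

Lemma psum_shift a n : psum a (S n) = a O + psum (fun k => a (S k)) n.
Proof. induction n; simpl in *; lra. Qed.

Lemma psum_add a m n : psum a (m + n) = psum a m + psum (fun k => a (m + k)%nat) n.
Proof.
  induction n; simpl. rewrite Nat.add_0_r; lra.
  rewrite Nat.add_succ_r. simpl. rewrite IHn. lra.
Qed.

Lemma bounded_series (a : nat -> R) (M : R) :
  (forall n, 0 <= a n) -> (forall N, psum a N <= M) ->
  ex_series a /\ Series a <= M.
Proof.
  intros Hpos HM.
  assert (Hf : ex_finite_lim_seq (sum_n a)).
  { apply ex_finite_lim_seq_incr with M.
    - intros n. rewrite !psum_sum_n. simpl. specialize (Hpos (S n)). simpl in *. lra.
    - intros n. rewrite psum_sum_n. apply HM. }
  destruct Hf as [l Hl].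
  assert (ex_series a) by (exists l; exact Hl).
  split; auto.
  assert (Series a = l).
  { unfold Series. rewrite (is_lim_seq_unique _ _ Hl). reflexivity. }
  rewrite H0.
  assert (Hle : Rbar_le l M).
  { apply is_lim_seq_le with (sum_n a) (fun _ => M); auto.
    - intros n. rewrite psum_sum_n. apply HM.
    - apply is_lim_seq_const. }
  simpl in Hle. exact Hle.
Qed.

Lemma psum_le_Series a n : (forall k, 0 <= a k) -> ex_series a -> psum a n <= Series a.
Proof.
  intros Hpos [l Hl].
  rewrite (is_series_unique _ _ Hl).
  destruct n. simpl.
  - assert (Rbar_le 0 l).
    { apply is_lim_seq_le with (fun _ => 0) (sum_n a); auto.
      - intros m. rewrite psum_sum_n. apply psum_nonneg; auto.
      - apply is_lim_seq_const. }
    simpl in H. exact H.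
  - assert (Rbar_le (psum a (S n)) l).
    { apply is_lim_seq_le_loc with (fun _ => psum a (S n)) (sum_n a); auto.
      - exists n. intros m Hm. rewrite psum_sum_n. apply psum_mono; auto. lia.
      - apply is_lim_seq_const. }
    simpl in H. exact H.
Qed.

Lemma Series_nonneg a : (forall k, 0 <= a k) -> ex_series a -> 0 <= Series a.
Proof. intros. pose proof (psum_le_Series a 0 H H0). simpl in H1. lra. Qed.

Lemma term_le_Series a n : (forall k, 0 <= a k) -> ex_series a -> a n <= Series a.
Proof.
  intros. pose proof (psum_le_Series a (S n) H H0). simpl in H1.
  pose proof (psum_nonneg a n H). lra.
Qed.

Lemma psum_to_Series a : ex_series a -> is_lim_seq (psum a) (Series a).
Proof.
  intros Hex. pose proof (Series_correct _ Hex) as H.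
  unfold is_series in H.
  apply is_lim_seq_incr_1.
  apply is_lim_seq_ext with (sum_n a). intros n. rewrite psum_sum_n. reflexivity.
  exact H.
Qed.

Definition sq (v : nat -> C) (n : nat) : R := Cmod (v n) ^ 2.
Definition S2 (v : nat -> C) : R := Series (sq v).

Lemma sq_nonneg v n : 0 <= sq v n.
Proof. unfold sq. apply pow2_ge_0. Qed.

Lemma l2norm_S2 v : l2norm v = sqrt (S2 v).
Proof. reflexivity. Qed.

Lemma S2_nonneg v : l2 v -> 0 <= S2 v.
Proof. intros H. apply Series_nonneg; auto. apply sq_nonneg. Qed.

Lemma Cmod_le_l2norm v n : l2 v -> Cmod (v n) <= l2norm v.
Proof.
  intros H. unfold l2norm.
  rewrite <- (sqrt_pow2 (Cmod (v n))) by apply Cmod_ge_0.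
  apply sqrt_le_1_alt. apply (term_le_Series (fun n => Cmod (v n) ^ 2)).
  - intros; apply pow2_ge_0.
  - exact H.
Qed.

Lemma l2_bound (x : nat -> C) (K : R) :
  (forall N, psum (sq x) N <= K) -> l2 x /\ S2 x <= K.
Proof.
  intros H. destruct (bounded_series (sq x) K (sq_nonneg x) H). split; auto.
Qed.

Lemma psum_sq_le_S2 v n : l2 v -> psum (sq v) n <= S2 v.
Proof. intros. apply psum_le_Series; auto. apply sq_nonneg. Qed.

Lemma Cmod_sq_le_S2 v n : l2 v -> Cmod (v n) ^ 2 <= S2 v.
Proof. intros. apply (term_le_Series (sq v)); auto. apply sq_nonneg. Qed.

Lemma Cmod_le_sqrtS2 v n : l2 v -> Cmod (v n) <= sqrt (S2 v).
Proof. intros. apply Cmod_le_l2norm. auto. Qed.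

Lemma sq_add_le (a b : C) : Cmod (a + b) ^ 2 <= 2 * Cmod a ^ 2 + 2 * Cmod b ^ 2.
Proof.
  pose proof (Cmod_triangle a b). pose proof (Cmod_ge_0 (a+b)).
  pose proof (Cmod_ge_0 a). pose proof (Cmod_ge_0 b).
  set (x := Cmod (a+b)%C) in *. set (y := Cmod a) in *. set (z := Cmod b) in *.
  assert (x * x <= (y + z) * (y + z)) by (apply Rmult_le_compat; lra).
  assert (0 <= (y - z) * (y - z)) by apply Rle_0_sqr.
  simpl. lra.
Qed.

Lemma sq3_le (a b c : R) : (a + b + c) ^ 2 <= 3 * (a^2 + b^2 + c^2).
Proof.
  assert (3 * (a^2 + b^2 + c^2) - (a + b + c) ^ 2 = (a-b)^2 + (b-c)^2 + (a-c)^2) by ring.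
  pose proof (pow2_ge_0 (a-b)). pose proof (pow2_ge_0 (b-c)). pose proof (pow2_ge_0 (a-c)). lra.
Qed.

Lemma l2norm_bound (u v : nat -> C) (M : R) :
  0 <= M -> S2 u <= M ^ 2 * S2 v -> l2norm u <= M * l2norm v.
Proof.
  intros HM H. unfold l2norm. fold (S2 u) (S2 v).
  rewrite <- (sqrt_pow2 M HM) at 1. rewrite <- sqrt_mult_alt by (apply pow2_ge_0).
  apply sqrt_le_1_alt. exact H.
Qed.

Lemma c_proj_eq (x y : C) : fst x = fst y -> snd x = snd y -> x = y.
Proof. destruct x, y; simpl; intros; subst; auto. Qed.

Fixpoint csum (f : nat -> C) (n : nat) : C :=
  match n with O => RtoC 0 | S m => Cplus (csum f m) (f m) end.

Lemma csum_ext f g n : (forall k, (k < n)%nat -> f k = g k) -> csum f n = csum g n.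
Proof.
  induction n; intros H; simpl; auto.
  rewrite IHn by (intros; apply H; lia). rewrite H by lia. auto.
Qed.

Lemma csum_plus f g n : csum (fun k => Cplus (f k) (g k)) n = Cplus (csum f n) (csum g n).
Proof. induction n; simpl. - apply c_proj_eq; simpl; lra. - rewrite IHn. ring. Qed.

Lemma csum_minus f g n : csum (fun k => Cminus (f k) (g k)) n = Cminus (csum f n) (csum g n).
Proof. induction n; simpl. - apply c_proj_eq; simpl; lra. - rewrite IHn. ring. Qed.

Lemma csum_scal c f n : csum (fun k => Cmult c (f k)) n = Cmult c (csum f n).
Proof. induction n; simpl. - apply c_proj_eq; simpl; lra. - rewrite IHn. ring. Qed.

Lemma csum_const c n : csum (fun _ => c) n = Cmult (RtoC (INR n)) c.
Proof.
  induction n; simpl csum. - apply c_proj_eq; simpl; lra.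
  - rewrite IHn. rewrite S_INR. rewrite RtoC_plus. ring.
Qed.

Lemma csum_zero n : csum (fun _ => RtoC 0) n = RtoC 0.
Proof. rewrite csum_const. ring. Qed.

Lemma csum_delta (F : nat -> C) a n :
  csum (fun k => if Nat.eqb k a then F k else RtoC 0) n = if Nat.ltb a n then F a else RtoC 0.
Proof.
  induction n; simpl csum.
  - destruct (Nat.ltb_spec a 0); [lia|]. apply c_proj_eq; simpl; lra.
  - rewrite IHn. destruct (Nat.eqb_spec n a); destruct (Nat.ltb_spec a n); destruct (Nat.ltb_spec a (S n));
      try lia; subst; ring.
Qed.

Lemma csum_cut (F : nat -> C) m n : (m <= n)%nat ->
  csum (fun k => if Nat.ltb k m then F k else RtoC 0) n = csum F m.
Proof.
  intros H; induction H.
  - apply csum_ext. intros k Hk. destruct (Nat.ltb_spec k m); [auto|lia].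
  - simpl csum. rewrite IHle. destruct (Nat.ltb_spec m0 m); [lia|]. ring.
Qed.

Lemma csum_split_last f n : csum f (S n) = Cplus (csum f n) (f n).
Proof. reflexivity. Qed.

Lemma Csum_app l1 l2 : Csum (l1 ++ l2) = Cplus (Csum l1) (Csum l2).
Proof. induction l1; simpl. - ring. - unfold Csum in *. simpl. rewrite IHl1. ring. Qed.

Lemma Csum_map_seq f n : Csum (map f (seq 0 n)) = csum f n.
Proof.
  induction n. - reflexivity.
  - rewrite seq_S, map_app, Csum_app, IHn. simpl. unfold Csum; simpl. ring.
Qed.

Lemma Csum_filter (f : nat -> bool) (v : nat -> C) l :
  Csum (map v (filter f l)) = Csum (map (fun k => if f k then v k else RtoC 0) l).
Proof.
  induction l; simpl; auto. destruct (f a); simpl; unfold Csum in *; simpl; rewrite IHl; ring.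
Qed.

Lemma length_filter_C (f : nat -> bool) (c : C) l :
  Cmult (RtoC (INR (length (filter f l)))) c = Csum (map (fun k => if f k then c else RtoC 0) l).
Proof.
  induction l. - unfold Csum; simpl. ring.
  - cbn [filter map]. destruct (f a); cbn [length]; unfold Csum in *; cbn [fold_right]; rewrite <- IHl.
    + rewrite S_INR, RtoC_plus. ring.
    + ring.
Qed.

Lemma Lap_sum p v i :
  Lap p v i = csum (fun k => if adjb p i k then Cminus (v i) (v k) else RtoC 0) (nb_bound p i).
Proof.
  unfold Lap, deg. rewrite length_filter_C, Csum_filter, !Csum_map_seq.
  rewrite <- csum_minus. apply csum_ext. intros k _. destruct (adjb p i k); ring.
Qed.

Lemma adjb_spec p i k : (1 <= p)%nat ->
  adjb p i k = (negb (Nat.eqb i k) &&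
     ((Nat.ltb i p && Nat.ltb k p) ||
      (Nat.leb (p-1) i && Nat.leb (p-1) k && (Nat.eqb k (S i) || Nat.eqb i (S k)))))%bool.
Proof.
  intros Hp. unfold adjb, vert.
  destruct (Z.eq_dec _ _) as [E|E];
  destruct (Nat.eqb_spec i k); destruct (Nat.ltb_spec i p); destruct (Nat.ltb_spec k p);
  destruct (Nat.leb_spec (p-1) i); destruct (Nat.leb_spec (p-1) k);
  destruct (Nat.eqb_spec k (S i)); destruct (Nat.eqb_spec i (S k)); simpl; try lia;
  repeat match goal with
  | |- context [Z.leb ?a ?b] => destruct (Z.leb_spec a b)
  | |- context [Z.eqb ?a ?b] => destruct (Z.eqb_spec a b)
  end; simpl; auto; lia.
Qed.

Lemma Lap_low p v i : (1 <= p)%nat -> (i < p)%nat ->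
  Lap p v i = Cplus (Cminus (Cmult (RtoC (INR p)) (v i)) (csum v p))
                    (if Nat.eqb i (p-1) then Cminus (v i) (v p) else RtoC 0).
Proof.
  intros Hp Hi. rewrite Lap_sum. unfold nb_bound.
  rewrite (csum_ext _ (fun k => Cplus (if Nat.ltb k p then Cminus (v i) (v k) else RtoC 0)
                      (if Nat.eqb k p then (if Nat.eqb i (p-1) then Cminus (v i) (v k) else RtoC 0) else RtoC 0))).
  - rewrite csum_plus, csum_cut by lia. rewrite csum_delta.
    destruct (Nat.ltb_spec p (p + i + 2)); [|lia].
    rewrite csum_minus, csum_const. ring.
  - intros k Hk. rewrite adjb_spec by lia.
    destruct (Nat.eqb_spec i k); destruct (Nat.ltb_spec i p); destruct (Nat.ltb_spec k p);
    destruct (Nat.leb_spec (p-1) i); destruct (Nat.leb_spec (p-1) k);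
    destruct (Nat.eqb_spec k (S i)); destruct (Nat.eqb_spec i (S k));
    destruct (Nat.eqb_spec k p); destruct (Nat.eqb_spec i (p-1)); simpl; subst; try lia; try ring.
Qed.

Lemma Lap_high p v i : (1 <= p)%nat -> (p <= i)%nat ->
  Lap p v i = Cminus (Cminus (Cmult (RtoC 2) (v i)) (v (i-1)%nat)) (v (S i)).
Proof.
  intros Hp Hi. rewrite Lap_sum. unfold nb_bound.
  rewrite (csum_ext _ (fun k => Cplus (if Nat.eqb k (i-1) then Cminus (v i) (v k) else RtoC 0)
                      (if Nat.eqb k (S i) then Cminus (v i) (v k) else RtoC 0))).
  - rewrite csum_plus, !csum_delta.
    destruct (Nat.ltb_spec (i-1) (p + i + 2)); [|lia].
    destruct (Nat.ltb_spec (S i) (p + i + 2)); [|lia].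
    apply c_proj_eq; simpl; lra.
  - intros k Hk. rewrite adjb_spec by lia.
    destruct (Nat.eqb_spec i k); destruct (Nat.ltb_spec i p); destruct (Nat.ltb_spec k p);
    destruct (Nat.leb_spec (p-1) i); destruct (Nat.leb_spec (p-1) k);
    destruct (Nat.eqb_spec k (S i)); destruct (Nat.eqb_spec i (S k));
    destruct (Nat.eqb_spec k (i-1)); simpl; subst; try lia; try ring.
Qed.

Lemma Lap_linear p a u v :
  Lap p (vadd (vscale a u) v) = vadd (vscale a (Lap p u)) (Lap p v).
Proof.
  apply functional_extensionality. intros i. unfold vadd at 2. unfold vscale at 2. rewrite !Lap_sum.
  unfold vadd, vscale.
  rewrite <- csum_scal, <- csum_plus. apply csum_ext. intros k _.
  destruct (adjb p i k); ring.
Qed.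

Lemma Lap_sub p u v i : Lap p (vsub u v) i = Cminus (Lap p u i) (Lap p v i).
Proof.
  rewrite !Lap_sum. unfold vsub. rewrite <- csum_minus. apply csum_ext. intros k _.
  destruct (adjb p i k); ring.
Qed.

Definition Aop (p : nat) (z : C) : Op := shift_op (Lap p) z.

Lemma Aop_eq p z v i : Aop p z v i = Cminus (Lap p v i) (Cmult z (v i)).
Proof. reflexivity. Qed.

Lemma Aop_sub p z u v i : Aop p z (vsub u v) i = Cminus (Aop p z u i) (Aop p z v i).
Proof. rewrite !Aop_eq, Lap_sub. unfold vsub. ring. Qed.

Lemma Aop_linear p z a u v :
  Aop p z (vadd (vscale a u) v) = vadd (vscale a (Aop p z u)) (Aop p z v).
Proof.
  apply functional_extensionality. intros i. unfold Aop, shift_op, vsub.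
  rewrite Lap_linear. unfold vadd, vscale, vsub. ring.
Qed.

Lemma Cmod_csum_le f n B : (forall k, (k < n)%nat -> Cmod (f k) <= B) -> Cmod (csum f n) <= INR n * B.
Proof.
  induction n; intros H; simpl csum.
  - rewrite Cmod_0. simpl. lra.
  - rewrite S_INR. eapply Rle_trans; [apply Cmod_triangle|].
    assert (Cmod (csum f n) <= INR n * B) by (apply IHn; intros; apply H; lia).
    specialize (H n ltac:(lia)). lra.
Qed.

Lemma Cmod_minus_le (a b : C) : Cmod (Cminus a b) <= Cmod a + Cmod b.
Proof.
  unfold Cminus. eapply Rle_trans; [apply Cmod_triangle|].
  rewrite Cmod_opp. lra.
Qed.

Lemma Cmod_scal_le (c a : C) : Cmod (Cmult c a) = Cmod c * Cmod a.
Proof. apply Cmod_mult. Qed.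

Lemma psum_pred_le (a : nat -> R) N : (forall k, 0 <= a k) ->
  psum (fun i => a (i - 1)%nat) N <= a O + psum a N.
Proof.
  intros Hpos. destruct N. simpl. specialize (Hpos O). lra.
  rewrite psum_shift. simpl (0 - 1)%nat.
  rewrite (psum_ext (fun k => a (S k - 1)%nat) a) by (intros; f_equal; lia).
  pose proof (psum_mono a N (S N) Hpos ltac:(lia)). lra.
Qed.

Lemma psum_succ_le (a : nat -> R) N : (forall k, 0 <= a k) ->
  psum (fun i => a (S i)) N <= psum a (S N).
Proof. intros Hpos. rewrite psum_shift. specialize (Hpos O). lra. Qed.

Lemma psum_const (K : R) N : psum (fun _ => K) N = INR N * K.
Proof. induction N; simpl psum. simpl; lra. rewrite IHN, S_INR. lra. Qed.

Lemma psum_ind_le (K : R) m N : 0 <= K -> psum (fun i => if Nat.ltb i m then K else 0) N <= INR m * K.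
Proof.
  intros HK.
  assert (H1 : forall N, (N <= m)%nat -> psum (fun i => if Nat.ltb i m then K else 0) N <= INR m * K).
  { intros N0 HN. eapply Rle_trans. apply psum_le with (b := fun _ => K).
    intros k _. destruct (Nat.ltb k m); lra. rewrite psum_const.
    apply Rmult_le_compat_r; auto. apply le_INR; auto. }
  destruct (Nat.le_gt_cases N m). apply H1; auto.
  replace N with (m + (N - m))%nat by lia. rewrite psum_add.
  rewrite (psum_ext (fun k => if Nat.ltb (m + k) m then K else 0) (fun _ => 0 * 0)).
  rewrite psum_scal. pose proof (H1 m (le_n m)). lra.
  intros k _. destruct (Nat.ltb_spec (m + k) m). lia. ring.
Qed.

Lemma op_bound (T : Op) (K : R) : 0 <= K ->
  (forall v, l2 v -> forall N, psum (sq (T v)) N <= K * S2 v) ->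
  (forall v, l2 v -> l2 (T v)) /\ exists M, forall v, l2 v -> l2norm (T v) <= M * l2norm v.
Proof.
  intros HK H. split.
  - intros v Hv. apply (l2_bound (T v) (K * S2 v)). apply H; auto.
  - exists (sqrt K). intros v Hv. apply l2norm_bound. apply sqrt_pos.
    rewrite pow2_sqrt by auto. apply (l2_bound (T v) (K * S2 v)). apply H; auto.
Qed.

Lemma l2_add u v : l2 u -> l2 v -> l2 (vadd u v).
Proof.
  intros Hu Hv. apply (l2_bound _ (2 * S2 u + 2 * S2 v)). intros N.
  eapply Rle_trans. apply psum_le with (b := fun k => 2 * sq u k + 2 * sq v k).
  intros k _. unfold sq, vadd. apply sq_add_le.
  rewrite psum_plus, !psum_scal. pose proof (psum_sq_le_S2 u N Hu). pose proof (psum_sq_le_S2 v N Hv). lra.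
Qed.

Lemma l2_scale a v : l2 v -> l2 (vscale a v).
Proof.
  intros Hv. apply (l2_bound _ (Cmod a ^ 2 * S2 v)). intros N.
  rewrite (psum_ext _ (fun k => Cmod a ^ 2 * sq v k)).
  rewrite psum_scal. pose proof (psum_sq_le_S2 v N Hv). apply Rmult_le_compat_l; auto. apply pow2_ge_0.
  intros k _. unfold sq, vscale. rewrite Cmod_mult. ring.
Qed.

Lemma vsub_eq u v : vsub u v = vadd u (vscale (RtoC (-1)) v).
Proof. apply functional_extensionality. intros i. unfold vsub, vadd, vscale. ring. Qed.

Lemma l2_sub u v : l2 u -> l2 v -> l2 (vsub u v).
Proof. intros. rewrite vsub_eq. apply l2_add; auto. apply l2_scale; auto. Qed.

Lemma l2_vzero : l2 vzero.
Proof.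
  apply (l2_bound _ 0). intros N. rewrite (psum_ext _ (fun _ => 0 * 0)). rewrite psum_scal. lra.
  intros. unfold sq, vzero. rewrite Cmod_0. ring.
Qed.

Lemma l2_finite (v : nat -> C) n : (forall i, (n <= i)%nat -> v i = RtoC 0) -> l2 v.
Proof.
  intros H. apply (l2_bound _ (psum (sq v) n)). intros N.
  destruct (Nat.le_gt_cases N n). apply psum_mono; auto. apply sq_nonneg.
  replace N with (n + (N - n))%nat by lia. rewrite psum_add.
  rewrite (psum_ext (fun k => sq v (n + k)%nat) (fun _ => 0 * 0)). rewrite psum_scal. lra.
  intros k _. unfold sq. rewrite H by lia. rewrite Cmod_0. ring.
Qed.

Section LapBound.
Variable p : nat.
Hypothesis Hp : (1 <= p)%nat.

Lemma Lap_pt_bound v i : l2 v ->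
  sq (Lap p v) i <= (if Nat.ltb i p then (2 * INR p + 2) ^ 2 * S2 v else 0)
                     + 12 * sq v i + 3 * sq v (i - 1)%nat + 3 * sq v (S i).
Proof.
  intros Hv. pose proof (sq_nonneg v i). pose proof (sq_nonneg v (i-1)%nat). pose proof (sq_nonneg v (S i)).
  pose proof (S2_nonneg v Hv) as HS.
  unfold sq. destruct (Nat.ltb_spec i p).
  - rewrite Lap_low by auto. set (B := l2norm v).
    assert (HB : forall k, Cmod (v k) <= B) by (intros; apply Cmod_le_l2norm; auto).
    assert (0 <= B) by (unfold B, l2norm; apply sqrt_pos).
    assert (Cmod (Cplus (Cminus (Cmult (RtoC (INR p)) (v i)) (csum v p))
       (if Nat.eqb i (p - 1) then Cminus (v i) (v p) else RtoC 0)) <= (2 * INR p + 2) * B).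
    { eapply Rle_trans; [apply Cmod_triangle|].
      assert (Cmod (Cminus (Cmult (RtoC (INR p)) (v i)) (csum v p)) <= 2 * INR p * B).
      { eapply Rle_trans; [apply Cmod_minus_le|]. rewrite Cmod_mult, Cmod_R, Rabs_pos_eq by apply pos_INR.
        pose proof (Cmod_csum_le v p B (fun k _ => HB k)).
        pose proof (Rmult_le_compat_l (INR p) _ _ (pos_INR p) (HB i)). lra. }
      assert (Cmod (if Nat.eqb i (p - 1) then Cminus (v i) (v p) else RtoC 0) <= 2 * B).
      { destruct (Nat.eqb i (p-1)). eapply Rle_trans; [apply Cmod_minus_le|]. pose proof (HB i); pose proof (HB p); lra.
        rewrite Cmod_0. lra. }
      lra. }
    assert (HB2 : B ^ 2 = S2 v). { unfold B, l2norm. rewrite pow2_sqrt; auto. }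
    match goal with |- Cmod ?X ^ 2 <= _ => set (Y := X) in * end.
    pose proof (Cmod_ge_0 Y) as HY.
    assert (Hsq : forall x y, 0 <= x -> x <= y -> x ^ 2 <= y ^ 2) by (intros; apply pow_incr; lra).
    match goal with H : Cmod Y <= _ |- _ => specialize (Hsq _ _ HY H) end.
    rewrite Rpow_mult_distr, HB2 in Hsq. unfold sq in *. lra.
  - rewrite Lap_high by lia.
    set (a := Cmod (v i)). set (b := Cmod (v (i-1)%nat)). set (c := Cmod (v (S i))).
    assert (Cmod (Cminus (Cminus (Cmult (RtoC 2) (v i)) (v (i - 1)%nat)) (v (S i))) <= 2 * a + b + c).
    { eapply Rle_trans; [apply Cmod_minus_le|]. eapply Rle_trans; [apply Rplus_le_compat_r, Cmod_minus_le|].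
      rewrite Cmod_mult, Cmod_R, Rabs_pos_eq by lra. unfold a, b, c. lra. }
    match goal with |- Cmod ?X ^ 2 <= _ => set (Y := X) in * end.
    pose proof (Cmod_ge_0 Y) as HY.
    pose proof (sq3_le (2 * a) b c) as Hs3.
    assert (Hsq : forall x y, 0 <= x -> x <= y -> x ^ 2 <= y ^ 2) by (intros; apply pow_incr; lra).
    match goal with H : Cmod Y <= _ |- _ => specialize (Hsq _ _ HY H) end.
    unfold sq in *. subst a b c. lra.
Qed.

Lemma Lap_bounded : bounded_op (Lap p).
Proof.
  set (K := INR p * (2 * INR p + 2) ^ 2 + 21).
  assert (HK : 0 <= K) by (unfold K; pose proof (pos_INR p); nra).
  assert (H : forall v, l2 v -> forall N, psum (sq (Lap p v)) N <= K * S2 v).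
  { intros v Hv N. pose proof (S2_nonneg v Hv) as HS.
    eapply Rle_trans. apply psum_le. intros k _. apply (Lap_pt_bound v k Hv).
    rewrite !psum_plus, !psum_scal.
    pose proof (psum_ind_le ((2 * INR p + 2) ^ 2 * S2 v) p N ltac:(apply Rmult_le_pos; auto; apply pow2_ge_0)).
    pose proof (psum_sq_le_S2 v N Hv).
    pose proof (psum_pred_le (sq v) N (sq_nonneg v)).
    pose proof (psum_succ_le (sq v) N (sq_nonneg v)).
    pose proof (psum_sq_le_S2 v (S N) Hv).
    pose proof (Cmod_sq_le_S2 v 0 Hv). unfold sq in *.
    unfold K. nra. }
  destruct (op_bound (Lap p) K HK H) as [H1 H2].
  split; [exact H1|]. split; [|exact H2].
  intros a u v _ _. apply Lap_linear.
Qed.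

Lemma Aop_l2 z v : l2 v -> l2 (Aop p z v).
Proof.
  intros Hv. unfold Aop, shift_op. apply l2_sub. apply Lap_bounded; auto. apply l2_scale; auto.
Qed.

End LapBound.

Lemma sqrt_sq_eq (t c : R) : 0 <= t -> 0 <= c -> t * t = c * c -> t = c.
Proof. intros. nra. Qed.

Lemma Csqrt_ex (w : C) : exists s : C, Cmult s s = w.
Proof.
  destruct w as [a b].
  set (m := sqrt (a * a + b * b)).
  assert (Hm0 : 0 <= m) by apply sqrt_pos.
  assert (Hm2 : m * m = a * a + b * b) by (apply sqrt_sqrt; nra).
  assert (Hma : -m <= a <= m) by (split; nra).
  set (x := sqrt ((m + a) / 2)). set (y := sqrt ((m - a) / 2)).
  assert (Hx : x * x = (m + a) / 2) by (apply sqrt_sqrt; lra).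
  assert (Hy : y * y = (m - a) / 2) by (apply sqrt_sqrt; lra).
  assert (Hx0 : 0 <= x) by apply sqrt_pos. assert (Hy0 : 0 <= y) by apply sqrt_pos.
  assert (Hxy : x * y = Rabs b / 2).
  { apply sqrt_sq_eq. nra. pose proof (Rabs_pos b); lra.
    replace (x * y * (x * y)) with ((x * x) * (y * y)) by ring. rewrite Hx, Hy.
    replace (Rabs b / 2 * (Rabs b / 2)) with ((Rabs b * Rabs b) / 4) by field.
    rewrite <- Rabs_mult, Rabs_pos_eq by nra. nra. }
  destruct (Rle_lt_dec 0 b).
  - exists (x, y). unfold Cmult; simpl. rewrite Rabs_pos_eq in Hxy by lra.
    f_equal; nra.
  - exists (x, -y). unfold Cmult; simpl. rewrite Rabs_left in Hxy by lra.
    f_equal; nra.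
Qed.

Lemma Cmult_integral (a b : C) : Cmult a b = RtoC 0 -> a = RtoC 0 \/ b = RtoC 0.
Proof.
  intros H. assert (Cmod a * Cmod b = 0) by (rewrite <- Cmod_mult, H; apply Cmod_0).
  destruct (Rmult_integral _ _ H0); [left|right]; apply Cmod_eq_0; auto.
Qed.

Lemma Cmult_eq_reg_l (c a b : C) : Cmult c a = Cmult c b -> c <> RtoC 0 -> a = b.
Proof.
  intros H Hc. transitivity (Cmult (Cinv c) (Cmult c a)). field; auto.
  rewrite H. field; auto.
Qed.

Lemma root_exists (z : C) : exists r : C,
  r <> RtoC 0 /\ Cmod r <= 1 /\ Cminus (RtoC 2) z = Cplus r (Cinv r).
Proof.
  destruct (Csqrt_ex (Cminus (Cmult (Cminus (RtoC 2) z) (Cminus (RtoC 2) z)) (RtoC 4))) as [s Hs].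
  set (b := Cminus (RtoC 2) z) in *.
  set (r1 := Cdiv (Cplus b s) (RtoC 2)). set (r2 := Cdiv (Cminus b s) (RtoC 2)).
  assert (H2 : RtoC 2 <> RtoC 0) by (intros E; injection E; lra).
  assert (Hprod : Cmult r1 r2 = RtoC 1).
  { assert (H4 : RtoC 4 <> RtoC 0) by (intros E; injection E; lra).
    assert (E : Cmult r1 r2 = Cdiv (Cminus (Cmult b b) (Cmult s s)) (RtoC 4)).
    { unfold r1, r2. replace (RtoC 4) with (Cmult (RtoC 2) (RtoC 2)) by (rewrite <- RtoC_mult; f_equal; lra).
      field. }
    rewrite E, Hs. field; auto. }
  assert (Hsum : Cplus r1 r2 = b) by (unfold r1, r2; field; auto).
  assert (Hr1 : r1 <> RtoC 0) by (intros E; rewrite E, Cmult_0_l in Hprod; apply C1_nz; auto).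
  assert (Hr2 : r2 <> RtoC 0) by (intros E; rewrite E, Cmult_0_r in Hprod; apply C1_nz; auto).
  assert (Hm : Cmod r1 * Cmod r2 = 1) by (rewrite <- Cmod_mult, Hprod, Cmod_1; auto).
  pose proof (Cmod_ge_0 r1). pose proof (Cmod_ge_0 r2).
  destruct (Rle_lt_dec (Cmod r1) 1).
  - exists r1. split; auto. split; auto.
    assert (Cinv r1 = r2) by (rewrite <- (Cmult_1_l (Cinv r1)), <- Hprod; field; auto).
    rewrite H1. auto.
  - exists r2. split; auto. split. nra.
    assert (Cinv r2 = r1) by (rewrite <- (Cmult_1_l (Cinv r2)), <- Hprod; field; auto).
    rewrite H1, <- Hsum. ring.
Qed.

Lemma root_unit_interval (z r : C) : Cmod r = 1 -> Cminus (RtoC 2) z = Cplus r (Cinv r) ->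
  Im z = 0 /\ 0 <= Re z <= 4.
Proof.
  destruct z as [zx zy], r as [x y]. unfold Cmod, Re, Im. cbn [fst snd]. intros Hm H.
  assert (Hs : x ^ 2 + y ^ 2 = 1).
  { rewrite <- sqrt_1 in Hm. apply sqrt_inj in Hm; nra. }
  unfold Cinv, Cplus, Cminus, Copp, RtoC in H; cbn [fst snd] in H. rewrite Hs in H.
  injection H. intros H1 H2. unfold Rdiv in *. rewrite Rinv_1 in *.
  assert (x * x <= 1) by nra. split. lra. split; nra.
Qed.

Lemma interval_root (z : C) : Im z = 0 -> 0 <= Re z <= 4 ->
  exists r : C, r <> RtoC 0 /\ Cmod r = 1 /\ Cminus (RtoC 2) z = Cplus r (Cinv r).
Proof.
  destruct z as [zx zy]. simpl. intros Hy Hx. subst zy.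
  set (a := (2 - zx) / 2).
  assert (Ha : a * a <= 1) by (unfold a; nra).
  set (y := sqrt (1 - a * a)).
  assert (Hy : y * y = 1 - a * a) by (apply sqrt_sqrt; lra).
  assert (Hn : a ^ 2 + y ^ 2 = 1) by nra.
  exists (a, y). split; [|split].
  - intros E. injection E. intros. subst. nra.
  - unfold Cmod; cbn [fst snd]. rewrite Hn. apply sqrt_1.
  - unfold Cinv, Cminus, Copp, RtoC; cbn [fst snd]. rewrite Hn. apply c_proj_eq; simpl; unfold a; field.
Qed.

Section Lam.
Variable p : nat.
Hypothesis Hp : (5 <= p)%nat.

Definition Pr : R := INR p.
Definition rm : R := 1/2 - sqrt (1/4 + 1 / (Pr - 2)).
Definition rp : R := 1/2 + sqrt (1/4 + 1 / (Pr - 2)).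
Definition lamS : R := Pr - (Pr - 1) * rm.

Lemma Pr_ge5 : 5 <= Pr.
Proof. unfold Pr. replace 5 with (INR 5) by (simpl; lra). apply le_INR; auto. Qed.

Lemma sq_def : sqrt (1/4 + 1 / (Pr - 2)) * sqrt (1/4 + 1 / (Pr - 2)) = 1/4 + 1/(Pr - 2).
Proof. pose proof Pr_ge5. apply sqrt_sqrt. assert (0 < 1 / (Pr - 2)) by (apply Rdiv_lt_0_compat; lra). lra. Qed.

Lemma rm_quad : (Pr - 2) * rm * rm - (Pr - 2) * rm - 1 = 0.
Proof.
  pose proof Pr_ge5. pose proof sq_def. unfold rm.
  set (s := sqrt (1/4 + 1/(Pr-2))) in *.
  replace ((Pr - 2) * (1 / 2 - s) * (1 / 2 - s) - (Pr - 2) * (1 / 2 - s) - 1)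
    with ((Pr - 2) * (s * s - 1/4) - 1) by field.
  rewrite H0. field. lra.
Qed.

Lemma rm_bounds : -2 / (Pr - 1) < rm < 0.
Proof.
  pose proof Pr_ge5. pose proof sq_def. unfold rm.
  set (s := sqrt (1/4 + 1/(Pr-2))) in *.
  assert (Hs0 : 0 <= s) by apply sqrt_pos.
  assert (h1 : 0 < 1 / (Pr - 2)) by (apply Rdiv_lt_0_compat; lra).
  assert (h2 : 1 / (Pr - 2) < 2 / (Pr - 1)).
  { apply Rmult_lt_reg_r with ((Pr - 2) * (Pr - 1)). nra.
    field_simplify; lra. }
  assert (h3 : 0 < 2 / (Pr - 1)) by (apply Rdiv_lt_0_compat; lra).
  split.
  - assert (s < 1/2 + 2 / (Pr - 1)). { apply Rsqr_incrst_0; unfold Rsqr; nra. } lra.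
  - nra.
Qed.

Lemma rm_gt_m1 : -1 < rm.
Proof.
  pose proof rm_bounds. pose proof Pr_ge5.
  assert (2 / (Pr - 1) <= 1/2). { apply Rmult_le_reg_r with (Pr - 1). lra. field_simplify; lra. }
  lra.
Qed.

Lemma rm_neq0 : rm <> 0.
Proof. pose proof rm_bounds. lra. Qed.

Lemma lamstar_bounds : Pr < lamS < Pr + 2.
Proof.
  pose proof rm_bounds as [h1 h2]. pose proof Pr_ge5. unfold lamS. split. nra.
  assert (-(Pr - 1) * rm < 2).
  { apply Rmult_lt_compat_l with (r := Pr - 1) in h1; [|lra].
    replace ((Pr - 1) * (-2 / (Pr - 1))) with (-2) in h1 by (field; lra). lra. }
  lra.
Qed.

Lemma lamstar_root : 2 - lamS = rm + / rm.
Proof.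
  pose proof rm_quad. pose proof Pr_ge5. pose proof rm_neq0. unfold lamS.
  assert (/ rm = (Pr - 2) * (rm - 1)).
  { apply Rmult_eq_reg_l with rm; auto. rewrite Rinv_r by auto. nra. }
  rewrite H2. ring.
Qed.

Definition DeltaP (z r : C) : C :=
  Cminus (Cmult (Cminus (RtoC 1) z) (Cminus (Cminus (RtoC (Pr + 1)) z) r)) (Cminus (RtoC Pr) z).

Lemma Delta_root (z r : C) : r <> RtoC 0 -> Cmod r < 1 ->
  Cminus (RtoC 2) z = Cplus r (Cinv r) -> DeltaP z r = RtoC 0 ->
  r = RtoC rm /\ z = RtoC lamS.
Proof.
  intros Hr0 Hr1 Hz HD.
  assert (Ez : z = Cminus (Cminus (RtoC 2) r) (Cinv r)).
  { transitivity (Cminus (RtoC 2) (Cminus (RtoC 2) z)); [ring|]. rewrite Hz. ring. }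
  assert (Hg : Cmult (Cminus (RtoC 1) r)
                 (Cplus (Cmult (RtoC (Pr - 2)) (Cmult r (Cminus (RtoC 1) r))) (RtoC 1)) = RtoC 0).
  { assert (Hg0 : Cmult (Cminus (RtoC 1) r)
                 (Cplus (Cmult (RtoC (Pr - 2)) (Cmult r (Cminus (RtoC 1) r))) (RtoC 1))
                 = Cmult (Cmult r r) (DeltaP z r)).
    { unfold DeltaP. rewrite Ez. rewrite !RtoC_plus, !RtoC_minus. field; auto. }
    rewrite Hg0, HD. ring. }
  apply Cmult_integral in Hg. destruct Hg as [Hg|Hg].
  - exfalso. assert (r = RtoC 1) by (apply (f_equal (fun t => Cminus (RtoC 1) t)) in Hg; rewrite <- (Copp_minus_distr) in Hg; unfold Cminus in *; ring_simplify in Hg; rewrite <- Hg; ring).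
    rewrite H, Cmod_R, Rabs_R1 in Hr1. lra.
  - pose proof rm_quad. pose proof Pr_ge5.
    assert (Hf : Cmult (Cminus r (RtoC rm)) (Cminus r (RtoC rp)) = RtoC 0).
    { apply (Cmult_eq_reg_l (RtoC (Pr - 2))). 2: { intros E. injection E. lra. }
      assert (E1 : Cplus (RtoC rm) (RtoC rp) = RtoC 1) by (rewrite <- RtoC_plus; f_equal; unfold rm, rp; lra).
      assert (E2 : Cmult (RtoC (Pr - 2)) (Cmult (RtoC rm) (RtoC rp)) = RtoC (-1)).
      { rewrite <- !RtoC_mult. f_equal. assert (rp = 1 - rm) by (unfold rp, rm; lra). rewrite H1. nra. }
      set (c := RtoC (Pr - 2)) in *.
      transitivity (Cplus (Cminus (Cmult c (Cmult r r)) (Cmult (Cmult c (Cplus (RtoC rm) (RtoC rp))) r))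
                          (Cmult c (Cmult (RtoC rm) (RtoC rp)))); [ring|].
      rewrite E1, E2, Cmult_0_r. rewrite <- Copp_0. rewrite <- Hg at 1. unfold c. ring. }
    apply Cmult_integral in Hf. destruct Hf as [Hf|Hf].
    + assert (Er : r = RtoC rm) by (apply Ceq_minus; auto).
      split; auto. rewrite Ez, Er. rewrite <- RtoC_inv by apply rm_neq0.
      rewrite <- !RtoC_minus. f_equal. pose proof lamstar_root. lra.
    + exfalso. assert (Er : r = RtoC rp) by (apply Ceq_minus; auto).
      rewrite Er, Cmod_R in Hr1. unfold rp in Hr1. pose proof (sqrt_pos (1/4 + 1/(Pr-2))).
      assert (1/2 < sqrt (1/4 + 1 / (Pr - 2))).
      { pose proof sq_def. assert (0 < 1/(Pr-2)) by (apply Rdiv_lt_0_compat; lra). nra. }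
      rewrite Rabs_pos_eq in Hr1; lra.
Qed.

Lemma Delta_lamstar : DeltaP (RtoC lamS) (RtoC rm) = RtoC 0.
Proof.
  pose proof rm_quad as Hq.
  unfold DeltaP, lamS. apply c_proj_eq; simpl; [|ring].
  transitivity ((Pr-1) * ((Pr - 2) * rm * rm - (Pr - 2) * rm - 1)); [ring|rewrite Hq; ring].
Qed.

End Lam.

Definition to0 (y : nat -> C) : Prop := is_lim_seq (fun n => Cmod (y n)) 0.

Lemma is_lim_seq_sqrt0 (a : nat -> R) : (forall n, 0 <= a n) -> is_lim_seq a 0 ->
  is_lim_seq (fun n => sqrt (a n)) 0.
Proof.
  intros Hpos H. apply is_lim_seq_Reals in H. apply is_lim_seq_Reals.
  intros eps Heps. destruct (H (eps * eps)) as [N HN]. nra.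
  exists N. intros n Hn. specialize (HN n Hn). unfold R_dist in *.
  rewrite Rminus_0_r in *. rewrite Rabs_pos_eq in * by (auto; apply sqrt_pos).
  rewrite <- (sqrt_square eps) by lra. apply sqrt_lt_1_alt. split; auto; lra.
Qed.

Lemma to0_l2 v : l2 v -> to0 v.
Proof.
  intros H. unfold to0. apply is_lim_seq_ext with (fun n => sqrt (sq v n)).
  intros n. unfold sq. rewrite sqrt_pow2 by apply Cmod_ge_0. auto.
  apply is_lim_seq_sqrt0. apply sq_nonneg. apply ex_series_lim_0. exact H.
Qed.

Lemma to0_le (y : nat -> C) (b : nat -> R) : (forall n, Cmod (y n) <= b n) -> is_lim_seq b 0 -> to0 y.
Proof.
  intros H Hb. unfold to0. apply is_lim_seq_le_le with (fun _ => 0) b; auto.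
  intros n. split; auto. apply Cmod_ge_0. apply is_lim_seq_const.
Qed.

Lemma to0_add y1 y2 : to0 y1 -> to0 y2 -> to0 (fun n => Cplus (y1 n) (y2 n)).
Proof.
  intros H1 H2. apply to0_le with (fun n => Cmod (y1 n) + Cmod (y2 n)).
  intros; apply Cmod_triangle. replace (Finite 0) with (Finite (0 + 0)) by (f_equal; lra).
  apply is_lim_seq_plus'; auto.
Qed.

Lemma to0_scale c y : to0 y -> to0 (fun n => Cmult c (y n)).
Proof.
  intros H. apply to0_le with (fun n => Cmod c * Cmod (y n)).
  intros; rewrite Cmod_mult; lra. replace (Finite 0) with (Rbar_mult (Cmod c) 0) by (simpl; f_equal; lra).
  apply is_lim_seq_scal_l; auto.
Qed.

Lemma to0_sub y1 y2 : to0 y1 -> to0 y2 -> to0 (fun n => Cminus (y1 n) (y2 n)).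
Proof.
  intros H1 H2. apply (to0_add y1 (fun n => Copp (y2 n))) in H1.
  - eapply is_lim_seq_ext; [|exact H1]. intros n. reflexivity.
  - apply to0_le with (fun n => Cmod (y2 n)). intros; rewrite Cmod_opp; lra. auto.
Qed.

Lemma to0_shift y m : to0 y -> to0 (fun n => y (m + n)%nat).
Proof.
  intros H. unfold to0 in *. apply (is_lim_seq_incr_n _ m) in H.
  eapply is_lim_seq_ext; [|exact H]. intros n. simpl. f_equal. f_equal. lia.
Qed.

Lemma to0_geom (r : C) c : Cmod r < 1 -> to0 (fun n => Cmult c (Cpow r n)).
Proof.
  intros Hr. apply to0_scale. unfold to0.
  apply is_lim_seq_ext with (fun n => Cmod r ^ n). intros; rewrite Cmod_pow; auto.
  apply is_lim_seq_geom. rewrite Rabs_pos_eq; auto. apply Cmod_ge_0.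
Qed.

Lemma to0_eq0 (y : nat -> C) : to0 y -> (forall n, Cmod (y n) = Cmod (y O)) -> y O = RtoC 0.
Proof.
  intros H Hc. apply Cmod_eq_0.
  assert (Rbar_le (Cmod (y O)) 0).
  { apply is_lim_seq_le with (fun _ => Cmod (y O)) (fun n => Cmod (y n)). intros n; specialize (Hc n); lra.
    apply is_lim_seq_const. exact H. }
  simpl in H0. pose proof (Cmod_ge_0 (y O)). lra.
Qed.

Lemma to0_le_eq0 (y : nat -> C) (e0 : R) : to0 y -> (forall n, e0 <= Cmod (y n)) -> e0 <= 0.
Proof.
  intros H Hc.
  assert (Rbar_le e0 0).
  { apply is_lim_seq_le with (fun _ => e0) (fun n => Cmod (y n)). auto.
    apply is_lim_seq_const. exact H. }
  simpl in H0. lra.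
Qed.

Lemma path_geom (r : C) (y : nat -> C) : r <> RtoC 0 -> Cmod r <= 1 ->
  (forall k, y (S (S k)) = Cminus (Cmult (Cplus r (Cinv r)) (y (S k))) (y k)) ->
  to0 y -> forall k, y k = Cmult (Cpow r k) (y O).
Proof.
  intros Hr0 Hr1 Hrec H0.
  set (e := fun k => Cminus (y (S k)) (Cmult r (y k))).
  assert (He : forall k, e (S k) = Cmult (Cinv r) (e k)).
  { intros k. unfold e. rewrite Hrec. field. auto. }
  assert (Hek : forall k, e k = Cmult (Cpow (Cinv r) k) (e O)).
  { induction k. simpl. ring. rewrite He, IHk. simpl. ring. }
  assert (Hm : forall k, Cmod (e O) <= Cmod (e k)).
  { intros k. rewrite (Hek k), Cmod_mult, Cpow_inv, Cmod_inv, Cmod_pow by (auto; apply Cpow_nz; auto).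
    assert (0 < Cmod r) by (apply Cmod_gt_0; auto).
    assert (Cmod r ^ k <= 1) by (rewrite <- (pow1 k); apply pow_incr; lra).
    assert (0 < Cmod r ^ k) by (apply pow_lt; auto).
    assert (1 <= / Cmod r ^ k). { rewrite <- Rinv_1. apply Rinv_le_contravar; lra. }
    pose proof (Cmod_ge_0 (e O)). nra. }
  assert (Hto : to0 e).
  { unfold e. apply to0_sub. apply (to0_shift y 1). auto. apply to0_scale. auto. }
  assert (He0 : e O = RtoC 0).
  { apply Cmod_eq_0. pose proof (to0_le_eq0 e (Cmod (e O)) Hto Hm). pose proof (Cmod_ge_0 (e O)). lra. }
  assert (Hy : forall k, y (S k) = Cmult r (y k)).
  { intros k. assert (e k = RtoC 0) by (rewrite Hek, He0; ring). unfold e in H.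
    apply Ceq_minus in H. auto. }
  induction k. simpl. ring. rewrite Hy, IHk. simpl. ring.
Qed.

Lemma path_geom_unit (r : C) (y : nat -> C) : r <> RtoC 0 -> Cmod r = 1 ->
  (forall k, y (S (S k)) = Cminus (Cmult (Cplus r (Cinv r)) (y (S k))) (y k)) ->
  to0 y -> forall k, y k = RtoC 0.
Proof.
  intros Hr0 Hr1 Hrec H0.
  pose proof (path_geom r y Hr0 ltac:(lra) Hrec H0) as Hg.
  assert (y O = RtoC 0).
  { apply to0_eq0; auto. intros n. rewrite Hg, Cmod_mult, Cmod_pow, Hr1, pow1. ring. }
  intros k. rewrite Hg, H. ring.
Qed.

Definition CSer (a : nat -> C) : C := (Series (fun n => fst (a n)), Series (fun n => snd (a n))).
Definition exCS (a : nat -> C) : Prop := ex_series (fun n => Cmod (a n)).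

Lemma Rabs_fst_le (c : C) : Rabs (fst c) <= Cmod c.
Proof. apply re_le_Cmod. Qed.
Lemma Rabs_snd_le (c : C) : Rabs (snd c) <= Cmod c.
Proof.
  destruct c as [x y]. unfold Cmod; simpl. rewrite <- sqrt_Rsqr_abs. apply sqrt_le_1_alt.
  unfold Rsqr. nra.
Qed.

Lemma exCS_fst a : exCS a -> ex_series (fun n => fst (a n)).
Proof.
  intros H. apply (ex_series_le (fun n => fst (a n)) (fun n => Cmod (a n))); auto.
  intros n. apply Rabs_fst_le.
Qed.
Lemma exCS_snd a : exCS a -> ex_series (fun n => snd (a n)).
Proof.
  intros H. apply (ex_series_le (fun n => snd (a n)) (fun n => Cmod (a n))); auto.
  intros n. apply Rabs_snd_le.
Qed.

Lemma exCS_le a (b : nat -> R) : (forall n, Cmod (a n) <= b n) -> ex_series b -> exCS a.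
Proof.
  intros H Hb. unfold exCS. apply (ex_series_le (fun n => Cmod (a n)) b); auto.
  intros n. unfold norm; simpl. unfold abs; simpl. rewrite Rabs_pos_eq by apply Cmod_ge_0. auto.
Qed.

Lemma CSer_ext a b : (forall n, a n = b n) -> CSer a = CSer b.
Proof.
  intros H. unfold CSer. f_equal; apply Series_ext; intros; rewrite H; auto.
Qed.

Lemma CSer_shift a : exCS a -> CSer a = Cplus (a O) (CSer (fun n => a (S n))).
Proof.
  intros H. unfold CSer. rewrite (Series_incr_1 (fun n => fst (a n))) by (apply exCS_fst; auto).
  rewrite (Series_incr_1 (fun n => snd (a n))) by (apply exCS_snd; auto).
  destruct (a O). reflexivity.
Qed.

Lemma exCS_lin c a b : exCS a -> exCS b -> exCS (fun n => Cplus (Cmult c (a n)) (b n)).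
Proof.
  intros Ha Hb. apply exCS_le with (fun n => Cmod c * Cmod (a n) + Cmod (b n)).
  intros n. eapply Rle_trans; [apply Cmod_triangle|]. rewrite Cmod_mult. lra.
  apply (ex_series_plus (fun n => Cmod c * Cmod (a n)) (fun n => Cmod (b n))); auto.
  apply (ex_series_scal_l (Cmod c) (fun n => Cmod (a n))); auto.
Qed.

Lemma CSer_lin c a b : exCS a -> exCS b ->
  CSer (fun n => Cplus (Cmult c (a n)) (b n)) = Cplus (Cmult c (CSer a)) (CSer b).
Proof.
  intros Ha Hb. pose proof (exCS_fst a Ha). pose proof (exCS_snd a Ha).
  pose proof (exCS_fst b Hb). pose proof (exCS_snd b Hb).
  destruct c as [c1 c2]. unfold CSer, Cplus, Cmult; simpl.
  f_equal.
  - rewrite Series_plus, Series_minus, !Series_scal_l; auto.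
    apply (ex_series_scal_l c1 (fun n => fst (a n))); auto.
    apply (ex_series_scal_l c2 (fun n => snd (a n))); auto.
    apply (ex_series_minus (fun n => c1 * fst (a n)) (fun n => c2 * snd (a n))).
    apply (ex_series_scal_l c1 (fun n => fst (a n))); auto.
    apply (ex_series_scal_l c2 (fun n => snd (a n))); auto.
  - rewrite Series_plus, Series_plus, !Series_scal_l; auto.
    apply (ex_series_scal_l c1 (fun n => snd (a n))); auto.
    apply (ex_series_scal_l c2 (fun n => fst (a n))); auto.
    apply (ex_series_plus (fun n => c1 * snd (a n)) (fun n => c2 * fst (a n))).
    apply (ex_series_scal_l c1 (fun n => snd (a n))); auto.
    apply (ex_series_scal_l c2 (fun n => fst (a n))); auto.
Qed.

Lemma Cmod_le_fst_snd (c : C) : Cmod c <= Rabs (fst c) + Rabs (snd c).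
Proof.
  destruct c as [x y]. unfold Cmod; simpl.
  rewrite <- (sqrt_pow2 (Rabs x + Rabs y)) by (pose proof (Rabs_pos x); pose proof (Rabs_pos y); lra).
  apply sqrt_le_1_alt. pose proof (Rabs_pos x); pose proof (Rabs_pos y).
  assert (x * x = Rabs x * Rabs x) by (rewrite <- Rabs_mult, Rabs_pos_eq; nra).
  assert (y * y = Rabs y * Rabs y) by (rewrite <- Rabs_mult, Rabs_pos_eq; nra). simpl. nra.
Qed.

Lemma Cmod_CSer_le a : exCS a -> Cmod (CSer a) <= 2 * Series (fun n => Cmod (a n)).
Proof.
  intros H. eapply Rle_trans; [apply Cmod_le_fst_snd|]. unfold CSer; simpl.
  assert (Rabs (Series (fun n => fst (a n))) <= Series (fun n => Cmod (a n))).
  { eapply Rle_trans. apply Series_Rabs.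
    apply (ex_series_le (fun n => Rabs (fst (a n))) (fun n => Cmod (a n))); auto.
    intros n. unfold norm; simpl; unfold abs; simpl. rewrite Rabs_Rabsolu. apply Rabs_fst_le.
    apply Series_le; auto. intros n; split. apply Rabs_pos. apply Rabs_fst_le. }
  assert (Rabs (Series (fun n => snd (a n))) <= Series (fun n => Cmod (a n))).
  { eapply Rle_trans. apply Series_Rabs.
    apply (ex_series_le (fun n => Rabs (snd (a n))) (fun n => Cmod (a n))); auto.
    intros n. unfold norm; simpl; unfold abs; simpl. rewrite Rabs_Rabsolu. apply Rabs_snd_le.
    apply Series_le; auto. intros n; split. apply Rabs_pos. apply Rabs_snd_le. }
  lra.
Qed.

Lemma conv_ineq (s a b : R) : 0 <= s < 1 -> (s * a + b) ^ 2 <= s * a ^ 2 + b ^ 2 / (1 - s).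
Proof.
  intros Hs.
  assert (s * a ^ 2 + b ^ 2 / (1 - s) - (s * a + b) ^ 2 = s * ((1 - s) * a - b) ^ 2 / (1 - s)) by (field; lra).
  assert (0 <= s * ((1 - s) * a - b) ^ 2 / (1 - s)).
  { apply Rmult_le_pos. apply Rmult_le_pos. lra. apply pow2_ge_0. apply Rlt_le, Rinv_0_lt_compat. lra. }
  lra.
Qed.

Lemma ex_series_zero : ex_series (fun _ : nat => 0).
Proof.
  apply ex_series_ext with (fun n => 0 * (/2) ^ n). intros n; apply Rmult_0_l.
  apply (ex_series_scal_l 0 (fun n => (/2) ^ n)). apply ex_series_geom. rewrite Rabs_pos_eq; lra.
Qed.

Lemma exCS_zero : exCS (fun _ => RtoC 0).
Proof. apply exCS_le with (fun _ => 0). intros; rewrite Cmod_0; lra. apply ex_series_zero. Qed.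

Lemma CSer_zero : CSer (fun _ => RtoC 0) = RtoC 0.
Proof.
  unfold CSer. simpl.
  assert (Series (fun _ => 0) = 0).
  { rewrite (Series_ext (fun _ => 0) (fun n => 0 * (/2)^n)) by (intros; ring).
    rewrite Series_scal_l. ring. }
  rewrite H. reflexivity.
Qed.

Lemma CSer_scal c a : exCS a -> CSer (fun n => Cmult c (a n)) = Cmult c (CSer a).
Proof.
  intros H. rewrite (CSer_ext _ (fun n => Cplus (Cmult c (a n)) (RtoC 0))) by (intros; ring).
  rewrite CSer_lin; auto. rewrite CSer_zero. ring. apply exCS_zero.
Qed.

Lemma Series_geom_val (t : R) : Rabs t < 1 -> Series (fun n => t ^ n) = / (1 - t).
Proof. intros. apply is_series_unique. apply is_series_geom; auto. Qed.

Lemma psum_geom (t : R) N : 0 <= t < 1 -> psum (fun k => t ^ k) N <= / (1 - t).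
Proof.
  intros Ht. assert (E : (1 - t) * psum (fun k => t ^ k) N = 1 - t ^ N).
  { induction N; simpl psum. simpl; ring. rewrite Rmult_plus_distr_l, IHN. simpl. ring. }
  assert (0 <= t ^ N) by (apply pow_le; lra).
  apply Rmult_le_reg_l with (1 - t). lra. rewrite E, Rinv_r by lra. lra.
Qed.

Section PathSolver.
Variable r : C.
Hypothesis Hr0 : r <> RtoC 0.
Hypothesis Hr1 : Cmod r < 1.

Definition s := Cmod r.
Lemma s_bounds : 0 <= s < 1.
Proof. unfold s. split; auto. apply Cmod_ge_0. Qed.

Definition gS (f : nat -> C) (j : nat) : C := CSer (fun m => Cmult (Cpow r m) (f (j + m)%nat)).

Lemma gS_ex f j : l2 f -> exCS (fun m => Cmult (Cpow r m) (f (j + m)%nat)).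
Proof.
  intros Hf. apply exCS_le with (fun m => s ^ m * l2norm f).
  intros m. rewrite Cmod_mult, Cmod_pow. fold s. apply Rmult_le_compat_l.
  apply pow_le, Cmod_ge_0. apply Cmod_le_l2norm; auto.
  apply ex_series_scal_r. apply ex_series_geom. rewrite Rabs_pos_eq; apply s_bounds.
Qed.

Lemma gS_rec f j : l2 f -> gS f j = Cplus (f j) (Cmult r (gS f (S j))).
Proof.
  intros Hf. unfold gS. rewrite CSer_shift by (apply gS_ex; auto).
  rewrite Nat.add_0_r. simpl Cpow. rewrite Cmult_1_l. f_equal.
  rewrite <- CSer_scal by (apply gS_ex; auto). apply CSer_ext. intros n.
  simpl Cpow. rewrite Nat.add_succ_r. simpl. ring.
Qed.

Lemma gS_bound f j : l2 f -> Cmod (gS f j) <= 2 * l2norm f / (1 - s).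
Proof.
  intros Hf. pose proof s_bounds. unfold gS.
  eapply Rle_trans. apply Cmod_CSer_le. apply gS_ex; auto.
  assert (Series (fun n => Cmod (Cmult (Cpow r n) (f (j + n)%nat))) <= l2norm f / (1 - s)).
  { eapply Rle_trans. apply Series_le with (b := fun m => s ^ m * l2norm f).
    intros n; split. apply Cmod_ge_0. rewrite Cmod_mult, Cmod_pow. fold s.
    apply Rmult_le_compat_l. apply pow_le; lra. apply Cmod_le_l2norm; auto.
    apply ex_series_scal_r. apply ex_series_geom. rewrite Rabs_pos_eq; lra.
    rewrite Series_scal_r, Series_geom_val by (rewrite Rabs_pos_eq; lra). unfold Rdiv. lra. }
  unfold Rdiv in *. lra.
Qed.

Lemma gS_lin a f1 f2 j : l2 f1 -> l2 f2 ->
  gS (vadd (vscale a f1) f2) j = Cplus (Cmult a (gS f1 j)) (gS f2 j).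
Proof.
  intros H1 H2. unfold gS. rewrite <- CSer_lin by (apply gS_ex; auto).
  apply CSer_ext. intros n. unfold vadd, vscale. ring.
Qed.

Definition Kg : R := 4 * s / (1 - s) ^ 3 + 1 / (1 - s) ^ 2.

Lemma sq_mono (x y : R) : 0 <= x -> x <= y -> x ^ 2 <= y ^ 2.
Proof. intros; apply pow_incr; lra. Qed.

Lemma gS_psum f N : l2 f -> psum (sq (gS f)) N <= Kg * S2 f.
Proof.
  intros Hf. pose proof s_bounds as Hs. set (g := gS f).
  assert (HS : 0 <= S2 f) by (apply S2_nonneg; auto).
  assert (Hpt : forall j, sq g j <= s * sq g (S j) + sq f j / (1 - s)).
  { intros j. unfold sq, g. rewrite (gS_rec f j Hf) at 1.
    assert (Cmod (Cplus (f j) (Cmult r (gS f (S j)))) <= s * Cmod (gS f (S j)) + Cmod (f j)).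
    { eapply Rle_trans. apply Cmod_triangle. rewrite Cmod_mult. fold s. lra. }
    eapply Rle_trans. apply sq_mono. apply Cmod_ge_0. exact H.
    apply conv_ineq; auto. }
  assert (Hsum : psum (sq g) N <= s * (psum (sq g) N + sq g N) + S2 f / (1 - s)).
  { eapply Rle_trans. apply psum_le. intros k _. apply Hpt.
    rewrite psum_plus, psum_scal.
    rewrite (psum_ext (fun k => sq f k / (1 - s)) (fun k => / (1 - s) * sq f k)) by (intros; unfold Rdiv; ring).
    rewrite psum_scal.
    assert (psum (fun k => sq g (S k)) N = psum (sq g) N + sq g N - sq g O).
    { pose proof (psum_shift (sq g) N). simpl in H. lra. }
    rewrite H. pose proof (sq_nonneg g O). pose proof (psum_sq_le_S2 f N Hf).
    assert (0 < / (1 - s)) by (apply Rinv_0_lt_compat; lra).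
    assert (s * (psum (sq g) N + sq g N - sq g 0%nat) <= s * (psum (sq g) N + sq g N)) by nra.
    unfold Rdiv. nra. }
  assert (HgN : sq g N <= 4 * S2 f / (1 - s) ^ 2).
  { unfold sq, g. eapply Rle_trans. apply sq_mono. apply Cmod_ge_0. apply gS_bound; auto.
    unfold l2norm. fold (S2 f). unfold Rdiv. rewrite !Rpow_mult_distr. rewrite pow2_sqrt by auto.
    rewrite pow_inv. unfold S2, sq. right. ring. }
  assert (Hfin : (1 - s) * psum (sq g) N <= s * (4 * S2 f / (1 - s) ^ 2) + S2 f / (1 - s)) by nra.
  unfold Kg. apply Rmult_le_reg_l with (1 - s). lra.
  eapply Rle_trans. exact Hfin. right. field. lra.
Qed.

Lemma gS_l2 f : l2 f -> l2 (gS f).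
Proof. intros Hf. apply (l2_bound _ (Kg * S2 f)). intros; apply gS_psum; auto. Qed.

Fixpoint QS (f : nat -> C) (k : nat) : C :=
  match k with O => RtoC 0 | S k' => Cmult r (Cplus (QS f k') (gS f k')) end.

Definition KQ : R := s ^ 2 * Kg / (1 - s) ^ 2.

Lemma Kg_nonneg : 0 <= Kg.
Proof.
  pose proof s_bounds. unfold Kg. apply Rplus_le_le_0_compat.
  apply Rmult_le_pos. lra. apply Rlt_le, Rinv_0_lt_compat, pow_lt; lra.
  apply Rmult_le_pos. lra. apply Rlt_le, Rinv_0_lt_compat, pow_lt; lra.
Qed.

Lemma QS_psum f N : l2 f -> psum (sq (QS f)) N <= KQ * S2 f.
Proof.
  intros Hf. pose proof s_bounds as Hs. pose proof Kg_nonneg.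
  assert (HS : 0 <= S2 f) by (apply S2_nonneg; auto).
  assert (Hpt : forall k, sq (QS f) (S k) <= s * sq (QS f) k + s ^ 2 * sq (gS f) k / (1 - s)).
  { intros k. unfold sq. simpl QS.
    assert (Cmod (Cmult r (Cplus (QS f k) (gS f k))) <= s * Cmod (QS f k) + s * Cmod (gS f k)).
    { rewrite Cmod_mult. fold s. pose proof (Cmod_triangle (QS f k) (gS f k)). nra. }
    eapply Rle_trans. apply sq_mono. apply Cmod_ge_0. exact H0.
    eapply Rle_trans. apply conv_ineq; auto. right. simpl. field. lra. }
  assert (HX : forall M, psum (sq (QS f)) (S M) <= KQ * S2 f).
  { intros M. rewrite psum_shift. unfold sq at 1. simpl QS. rewrite Cmod_0.
    assert (HA : psum (fun k => sq (QS f) (S k)) M <= s * psum (sq (QS f)) M + s ^ 2 / (1 - s) * psum (sq (gS f)) M).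
    { eapply Rle_trans. apply psum_le. intros k _. apply Hpt.
      rewrite psum_plus, psum_scal.
      rewrite (psum_ext (fun k => s ^ 2 * sq (gS f) k / (1 - s)) (fun k => s ^ 2 / (1 - s) * sq (gS f) k)) by (intros; unfold Rdiv; ring).
      rewrite psum_scal. lra. }
    pose proof (gS_psum f M Hf) as HB.
    assert (HC : psum (sq (QS f)) M <= psum (sq (QS f)) (S M)) by (apply psum_mono; [apply sq_nonneg|lia]).
    assert (HQ0 : sq (QS f) O = 0) by (unfold sq; simpl QS; rewrite Cmod_0; ring).
    rewrite psum_shift, HQ0 in HC.
    assert (HD : 0 <= s ^ 2 / (1 - s)) by (apply Rmult_le_pos; [apply pow2_ge_0|apply Rlt_le, Rinv_0_lt_compat; lra]).
    set (X := psum (fun k => sq (QS f) (S k)) M) in *.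
    assert (HE : X <= s * X + s ^ 2 / (1 - s) * (Kg * S2 f)).
    { assert (s * psum (sq (QS f)) M <= s * (0 + X)) by (apply Rmult_le_compat_l; lra).
      assert (s ^ 2 / (1 - s) * psum (sq (gS f)) M <= s ^ 2 / (1 - s) * (Kg * S2 f)) by (apply Rmult_le_compat_l; lra).
      replace (0 ^ 2) with 0 in * by ring. lra. }
    assert (HF : (1 - s) * X <= s ^ 2 / (1 - s) * (Kg * S2 f)) by lra.
    replace (0 ^ 2) with 0 by ring. rewrite Rplus_0_l.
    unfold KQ. apply Rmult_le_reg_l with (1 - s). lra.
    eapply Rle_trans. exact HF. right. field. lra. }
  destruct N. simpl. pose proof (HX O). pose proof (psum_nonneg (sq (QS f)) 1 (sq_nonneg _)).
  unfold KQ. apply Rmult_le_pos; auto. apply Rmult_le_pos. apply Rmult_le_pos. apply pow2_ge_0. auto.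
  apply Rlt_le, Rinv_0_lt_compat, pow_lt; lra.
  apply HX.
Qed.

Lemma QS_l2 f : l2 f -> l2 (QS f).
Proof. intros Hf. apply (l2_bound _ (KQ * S2 f)). intros; apply QS_psum; auto. Qed.

Lemma QS_lin a f1 f2 k : l2 f1 -> l2 f2 ->
  QS (vadd (vscale a f1) f2) k = Cplus (Cmult a (QS f1 k)) (QS f2 k).
Proof.
  intros H1 H2. induction k; simpl. ring. rewrite IHk, gS_lin by auto. ring.
Qed.

Lemma QS_rec f k : l2 f ->
  Cminus (Cminus (Cmult (Cplus r (Cinv r)) (QS f (S k))) (QS f k)) (QS f (S (S k))) = f k.
Proof.
  intros Hf. simpl QS at 1 3. simpl QS at 2.
  rewrite (gS_rec f k Hf). field. auto.
Qed.

End PathSolver.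

Lemma psum_cutL (x : nat -> R) q N : (forall k, 0 <= x k) ->
  psum (fun i => if Nat.ltb i q then x i else 0) N <= psum x q.
Proof.
  intros Hx. induction N; simpl psum.
  - apply psum_nonneg; auto.
  - destruct (Nat.ltb_spec N q).
    + assert (psum (fun i => if Nat.ltb i q then x i else 0) N + x N <= psum x (S N)).
      { simpl. apply Rplus_le_compat_r. apply psum_le. intros k Hk. destruct (Nat.ltb_spec k q); [lra|lia]. }
      pose proof (psum_mono x (S N) q Hx ltac:(lia)). lra.
    + lra.
Qed.

Lemma psum_shiftR (x : nat -> R) q N :
  psum (fun i => if Nat.ltb i q then 0 else x (i - q)%nat) N = psum x (N - q).
Proof.
  induction N. reflexivity.
  change (psum (fun i => if Nat.ltb i q then 0 else x (i - q)%nat) (S N)) with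
    (psum (fun i => if Nat.ltb i q then 0 else x (i - q)%nat) N + (if Nat.ltb N q then 0 else x (N - q)%nat)).
  rewrite IHN. destruct (Nat.ltb_spec N q).
  - replace (S N - q)%nat with O by lia. replace (N - q)%nat with O by lia. simpl. lra.
  - replace (S N - q)%nat with (S (N - q)) by lia. simpl. reflexivity.
Qed.

Lemma l2_fpath p w : l2 w -> l2 (fun m => w (p + m)%nat).
Proof.
  intros H. unfold l2 in *. apply (ex_series_incr_n (fun n => Cmod (w n) ^ 2) p) in H. exact H.
Qed.

Lemma S2_fpath p w : l2 w -> S2 (fun m => w (p + m)%nat) <= S2 w.
Proof.
  intros H. apply (l2_bound _ (S2 w)). intros N.
  eapply Rle_trans. 2: apply (psum_sq_le_S2 w (p + N) H).
  rewrite psum_add. pose proof (psum_nonneg (sq w) p (sq_nonneg w)). unfold sq at 1 3. lra.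
Qed.

Section Build.
Variable p : nat.
Hypothesis Hp : (5 <= p)%nat.
Variables z r : C.
Hypothesis Hr0 : r <> RtoC 0.
Hypothesis Hr1 : Cmod r < 1.
Hypothesis Hz : Cminus (RtoC 2) z = Cplus r (Cinv r).

Definition fpath (w : nat -> C) : nat -> C := fun m => w (p + m)%nat.

Definition build (u : nat -> C) (al : C) (w : nat -> C) : nat -> C :=
  fun i => if Nat.ltb i (p - 1) then u i
           else Cplus (QS r (fpath w) (i - (p - 1))) (Cmult al (Cpow r (i - (p - 1)))).

Lemma build_path u al w k : build u al w (p - 1 + k)%nat = Cplus (QS r (fpath w) k) (Cmult al (Cpow r k)).
Proof.
  unfold build. destruct (Nat.ltb_spec (p - 1 + k) (p - 1)); [lia|].
  replace (p - 1 + k - (p - 1))%nat with k by lia. reflexivity.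
Qed.

Lemma build_low u al w i : (i < p - 1)%nat -> build u al w i = u i.
Proof. intros H. unfold build. destruct (Nat.ltb_spec i (p - 1)); [auto|lia]. Qed.

Lemma A_build_high u al w i : (p <= i)%nat -> l2 w -> Aop p z (build u al w) i = w i.
Proof.
  intros Hi Hw. set (k := (i - p)%nat).
  assert (Ei : i = (p - 1 + S k)%nat) by (unfold k; lia).
  rewrite Ei. rewrite Aop_eq, Lap_high by lia.
  replace (p - 1 + S k - 1)%nat with (p - 1 + k)%nat by lia.
  replace (S (p - 1 + S k)) with (p - 1 + S (S k))%nat by lia.
  rewrite !build_path.
  replace (w (p - 1 + S k)%nat) with (fpath w k) by (unfold fpath; f_equal; lia).
  rewrite <- (QS_rec r Hr0 Hr1 (fpath w) k (l2_fpath p w Hw)).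
  assert (Ez : z = Cminus (RtoC 2) (Cplus r (Cinv r))) by (rewrite <- Hz; ring). rewrite Ez.
  simpl Cpow. field. auto.
Qed.

Lemma csum_build u al w : csum (build u al w) p = Cplus (csum u (p - 1)) al.
Proof.
  replace p with (S (p - 1)) at 1 by lia. rewrite csum_split_last.
  rewrite (csum_ext _ u) by (intros; apply build_low; auto).
  replace (build u al w (p - 1)%nat) with (build u al w (p - 1 + 0)%nat) by (f_equal; lia).
  rewrite build_path. simpl. ring.
Qed.

Lemma A_build_low u al w i : (i < p - 1)%nat ->
  Aop p z (build u al w) i = Cminus (Cmult (Cminus (RtoC (INR p)) z) (u i)) (Cplus (csum u (p - 1)) al).
Proof.
  intros Hi. rewrite Aop_eq, Lap_low by lia. rewrite csum_build, build_low by auto.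
  destruct (Nat.eqb_spec i (p - 1)); [lia|]. ring.
Qed.

Lemma A_build_q u al w :
  Aop p z (build u al w) (p - 1)%nat =
  Cminus (Cminus (Cmult (Cminus (RtoC (INR p + 1)) z) al) (Cplus (csum u (p - 1)) al))
         (Cplus (QS r (fpath w) 1) (Cmult al r)).
Proof.
  rewrite Aop_eq, Lap_low by lia. rewrite csum_build.
  destruct (Nat.eqb_spec (p - 1) (p - 1)); [|lia].
  replace (build u al w (p - 1)%nat) with (build u al w (p - 1 + 0)%nat) by (f_equal; lia).
  replace (build u al w p) with (build u al w (p - 1 + 1)%nat) by (f_equal; lia).
  rewrite !build_path.
  simpl QS. simpl Cpow. rewrite RtoC_plus. ring.
Qed.

Lemma build_l2 u al w : l2 w -> l2 (build u al w) /\
  S2 (build u al w) <= 3 * (psum (sq u) (p - 1) + KQ r * S2 w + Cmod al ^ 2 / (1 - s r ^ 2)).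
Proof.
  intros Hw. pose proof (s_bounds r Hr1) as Hs.
  apply l2_bound. intros N.
  set (q := (p - 1)%nat).
  set (a1 := fun i => if Nat.ltb i q then u i else RtoC 0).
  set (a2 := fun i => if Nat.ltb i q then RtoC 0 else QS r (fpath w) (i - q)).
  set (a3 := fun i => if Nat.ltb i q then RtoC 0 else Cmult al (Cpow r (i - q))).
  assert (Hpt : forall i, sq (build u al w) i <= 3 * (sq a1 i + sq a2 i + sq a3 i)).
  { intros i. unfold sq, a1, a2, a3, build. fold q.
    destruct (Nat.ltb_spec i q).
    - rewrite !Cmod_0. replace (0 ^ 2) with 0 by ring. pose proof (pow2_ge_0 (Cmod (u i))). lra.
    - rewrite Cmod_0. eapply Rle_trans. apply sq_mono. apply Cmod_ge_0. apply Cmod_triangle.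
      pose proof (sq3_le 0 (Cmod (QS r (fpath w) (i - q))) (Cmod (Cmult al (Cpow r (i - q))))).
      replace (0 + Cmod (QS r (fpath w) (i - q)) + Cmod (Cmult al (Cpow r (i - q))))
        with (Cmod (QS r (fpath w) (i - q)) + Cmod (Cmult al (Cpow r (i - q)))) in H0 by ring. lra. }
  eapply Rle_trans. apply psum_le. intros k _. apply Hpt.
  rewrite psum_scal, !psum_plus. apply Rmult_le_compat_l. lra.
  assert (H1 : psum (sq a1) N <= psum (sq u) q).
  { eapply Rle_trans. 2: apply (psum_cutL (sq u) q N (sq_nonneg u)).
    right. apply psum_ext. intros k _. unfold sq, a1. destruct (Nat.ltb k q); auto. rewrite Cmod_0. ring. }
  assert (H2 : psum (sq a2) N <= KQ r * S2 w).
  { rewrite (psum_ext _ (fun i => if Nat.ltb i q then 0 else sq (QS r (fpath w)) (i - q)%nat)).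
    rewrite (psum_shiftR (sq (QS r (fpath w))) q N). eapply Rle_trans. apply QS_psum; auto. apply l2_fpath; auto.
    apply Rmult_le_compat_l. pose proof (Kg_nonneg r Hr1). unfold KQ.
    apply Rmult_le_pos. apply Rmult_le_pos. apply pow2_ge_0. auto.
    apply Rlt_le, Rinv_0_lt_compat, pow_lt. lra.
    apply S2_fpath; auto.
    intros k _. unfold sq, a2. destruct (Nat.ltb k q); auto. rewrite Cmod_0. ring. }
  assert (H3 : psum (sq a3) N <= Cmod al ^ 2 / (1 - s r ^ 2)).
  { rewrite (psum_ext _ (fun i => if Nat.ltb i q then 0 else (Cmod al ^ 2 * (s r ^ 2) ^ (i - q)))).
    rewrite (psum_shiftR (fun i => Cmod al ^ 2 * (s r ^ 2) ^ i) q N), psum_scal. unfold Rdiv. apply Rmult_le_compat_l. apply pow2_ge_0.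
    apply psum_geom. split. apply pow2_ge_0. nra.
    intros k _. unfold sq, a3. destruct (Nat.ltb k q). rewrite Cmod_0. ring.
    rewrite Cmod_mult, Cmod_pow. fold (s r). rewrite <- pow_mult. rewrite Rpow_mult_distr.
    f_equal. rewrite <- pow_mult. f_equal. lia. }
  lra.
Qed.

End Build.

Lemma INR_pm1 p : (1 <= p)%nat -> INR (p - 1) = INR p - 1.
Proof. intros. rewrite minus_INR by auto. simpl. ring. Qed.

Lemma Aop_high_rec p z x k : (5 <= p)%nat -> Aop p z x (p - 1 + S k)%nat = RtoC 0 ->
  x (p - 1 + S (S k))%nat = Cminus (Cmult (Cminus (RtoC 2) z) (x (p - 1 + S k)%nat)) (x (p - 1 + k)%nat).
Proof.
  intros Hp H. rewrite Aop_eq, Lap_high in H by lia.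
  replace (p - 1 + S k - 1)%nat with (p - 1 + k)%nat in H by lia.
  replace (S (p - 1 + S k)) with (p - 1 + S (S k))%nat in H by lia.
  apply Ceq_minus. rewrite <- Copp_0, <- H. ring.
Qed.

Lemma kernel_path p z r x : (5 <= p)%nat -> r <> RtoC 0 -> Cmod r <= 1 ->
  Cminus (RtoC 2) z = Cplus r (Cinv r) -> l2 x ->
  (forall i, (p <= i)%nat -> Aop p z x i = RtoC 0) ->
  forall k, x (p - 1 + k)%nat = Cmult (Cpow r k) (x (p - 1)%nat).
Proof.
  intros Hp Hr0 Hr1 Hz Hx HA k.
  pose proof (path_geom r (fun k => x (p - 1 + k)%nat) Hr0 Hr1) as HG.
  replace (x (p - 1)%nat) with (x (p - 1 + 0)%nat) by (f_equal; lia). apply HG.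
  - intros j. rewrite Aop_high_rec with (z := z); auto. rewrite Hz. ring. apply HA. lia.
  - apply to0_shift. apply to0_l2; auto.
Qed.

Lemma kernel_path_unit p z r x : (5 <= p)%nat -> r <> RtoC 0 -> Cmod r = 1 ->
  Cminus (RtoC 2) z = Cplus r (Cinv r) -> l2 x ->
  (forall i, (p <= i)%nat -> Aop p z x i = RtoC 0) ->
  forall k, x (p - 1 + k)%nat = RtoC 0.
Proof.
  intros Hp Hr0 Hr1 Hz Hx HA k.
  pose proof (path_geom_unit r (fun k => x (p - 1 + k)%nat) Hr0 Hr1) as HG.
  apply HG.
  - intros j. rewrite Aop_high_rec with (z := z); auto. rewrite Hz. ring. apply HA. lia.
  - apply to0_shift. apply to0_l2; auto.
Qed.

Section Kernel.
Variable p : nat.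
Hypothesis Hp : (5 <= p)%nat.
Variables z r : C.
Hypothesis Hr0 : r <> RtoC 0.
Hypothesis Hr1 : Cmod r <= 1.
Hypothesis Hz : Cminus (RtoC 2) z = Cplus r (Cinv r).

Definition cc : C := Cminus (Cminus (RtoC (INR p + 1)) z) r.

Lemma kernel_eqs x : l2 x -> (forall i, Aop p z x i = RtoC 0) ->
  (forall k, x (p - 1 + k)%nat = Cmult (Cpow r k) (x (p - 1)%nat)) /\
  csum x p = Cmult cc (x (p - 1)%nat) /\
  (forall i, (i < p - 1)%nat -> Cmult (Cminus (RtoC (INR p)) z) (x i) = csum x p).
Proof.
  intros Hx HA.
  assert (Hk := kernel_path p z r x Hp Hr0 Hr1 Hz Hx (fun i _ => HA i)).
  split; auto. split.
  - pose proof (HA (p - 1)%nat) as Hq. rewrite Aop_eq, Lap_low in Hq by lia.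
    destruct (Nat.eqb_spec (p - 1) (p - 1)); [|lia].
    replace (x p) with (x (p - 1 + 1)%nat) in Hq by (f_equal; lia). rewrite Hk in Hq.
    apply Ceq_minus. rewrite <- Copp_0, <- Hq. unfold cc. rewrite RtoC_plus. simpl. ring.
  - intros i Hi. pose proof (HA i) as Hq. rewrite Aop_eq, Lap_low in Hq by lia.
    destruct (Nat.eqb_spec i (p - 1)); [lia|].
    apply Ceq_minus. rewrite <- Hq. ring.
Qed.

Lemma kernel_Delta x : l2 x -> (forall i, Aop p z x i = RtoC 0) -> z <> RtoC (INR p) ->
  Cmult (DeltaP p z r) (x (p - 1)%nat) = RtoC 0.
Proof.
  intros Hx HA Hzp. destruct (kernel_eqs x Hx HA) as [Hk [HT Hi]].
  set (b := x (p - 1)%nat) in *. set (T := csum x p) in *.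
  assert (Hpz : Cminus (RtoC (INR p)) z <> RtoC 0) by (intros E; apply Hzp; apply Ceq_minus in E; auto).
  assert (Hs : csum x (p - 1) = Cmult (RtoC (INR (p - 1))) (Cdiv T (Cminus (RtoC (INR p)) z))).
  { rewrite <- csum_const. apply csum_ext. intros i Hi'. rewrite <- (Hi i Hi'). field. auto. }
  assert (HT2 : T = Cplus (csum x (p - 1)) b).
  { unfold T, b. replace p with (S (p - 1)) at 1 by lia. reflexivity. }
  rewrite Hs, INR_pm1 in HT2 by lia.
  unfold DeltaP, Pr. unfold cc in HT. rewrite RtoC_minus in HT2. rewrite RtoC_plus in *.
  assert (E1 : Cmult (Cminus (RtoC (INR p)) z) T =
               Cplus (Cmult (Cminus (RtoC (INR p)) (RtoC 1)) T) (Cmult (Cminus (RtoC (INR p)) z) b)).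
  { rewrite HT2 at 1. field. auto. }
  rewrite HT in E1. apply Ceq_minus in E1. rewrite <- E1. ring.
Qed.

Lemma kernel_zero x : l2 x -> (forall i, Aop p z x i = RtoC 0) -> z <> RtoC (INR p) ->
  x (p - 1)%nat = RtoC 0 -> x = vzero.
Proof.
  intros Hx HA Hzp Hb. destruct (kernel_eqs x Hx HA) as [Hk [HT Hi]].
  rewrite Hb, Cmult_0_r in HT.
  assert (Hpz : Cminus (RtoC (INR p)) z <> RtoC 0) by (intros E; apply Hzp; apply Ceq_minus in E; auto).
  apply functional_extensionality. intros i. unfold vzero.
  destruct (Nat.lt_ge_cases i (p - 1)).
  - specialize (Hi i H). rewrite HT in Hi. apply Cmult_integral in Hi. destruct Hi; auto. contradiction.
  - replace i with (p - 1 + (i - (p - 1)))%nat by lia. rewrite Hk, Hb. ring.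
Qed.

End Kernel.

Lemma kernel_path_unit_to0 p z r x : (5 <= p)%nat -> r <> RtoC 0 -> Cmod r = 1 ->
  Cminus (RtoC 2) z = Cplus r (Cinv r) -> to0 x ->
  (forall i, (p <= i)%nat -> Aop p z x i = RtoC 0) ->
  forall k, x (p - 1 + k)%nat = RtoC 0.
Proof.
  intros Hp Hr0 Hr1 Hz Hx HA k.
  pose proof (path_geom_unit r (fun k => x (p - 1 + k)%nat) Hr0 Hr1) as HG.
  apply HG.
  - intros j. rewrite Aop_high_rec with (z := z); auto. rewrite Hz. ring. apply HA. lia.
  - apply to0_shift. auto.
Qed.

Lemma fpath_lin p a u v : fpath p (vadd (vscale a u) v) = vadd (vscale a (fpath p u)) (fpath p v).
Proof. reflexivity. Qed.

Lemma csum_lin a u v n : csum (vadd (vscale a u) v) n = Cplus (Cmult a (csum u n)) (csum v n).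
Proof. unfold vadd, vscale. rewrite csum_plus, csum_scal. reflexivity. Qed.

Lemma Cmod_div (a b : C) : b <> RtoC 0 -> Cmod (Cdiv a b) = Cmod a / Cmod b.
Proof. intros. unfold Cdiv. rewrite Cmod_mult, Cmod_inv by auto. reflexivity. Qed.

Lemma QS1_bound r f : Cmod r < 1 -> l2 f -> Cmod (QS r f 1) <= 2 * s r / (1 - s r) * l2norm f.
Proof.
  intros Hr1 Hf. simpl QS. rewrite Cmod_mult. fold (s r).
  rewrite Cplus_0_l. pose proof (gS_bound r Hr1 f 0 Hf). pose proof (s_bounds r Hr1).
  apply Rle_trans with (s r * (2 * l2norm f / (1 - s r))). apply Rmult_le_compat_l; lra.
  right. field. lra.
Qed.

Section Resolvent.
Variable p : nat.
Hypothesis Hp : (5 <= p)%nat.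
Variables z r : C.
Hypothesis Hr0 : r <> RtoC 0.
Hypothesis Hr1 : Cmod r < 1.
Hypothesis Hz : Cminus (RtoC 2) z = Cplus r (Cinv r).
Hypothesis Hzp : z <> RtoC (INR p).
Hypothesis HD : DeltaP p z r <> RtoC 0.

Lemma Hpz : Cminus (RtoC (INR p)) z <> RtoC 0.
Proof. intros E; apply Hzp; apply Ceq_minus in E; auto. Qed.

Definition Wv (w : nat -> C) : C := csum w (p - 1).
Definition Rv (w : nat -> C) : C := Cplus (w (p - 1)%nat) (QS r (fpath p w) 1).
Definition alpha (w : nat -> C) : C :=
  Cdiv (Cplus (Wv w) (Cmult (Cminus (RtoC 1) z) (Rv w))) (DeltaP p z r).
Definition Tt (w : nat -> C) : C := Cminus (Cmult (cc p z r) (alpha w)) (Rv w).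
Definition uu (w : nat -> C) (i : nat) : C := Cdiv (Cplus (w i) (Tt w)) (Cminus (RtoC (INR p)) z).
Definition Gop (w : nat -> C) : nat -> C := build p r (uu w) (alpha w) w.

Lemma key_T w : Cplus (csum (uu w) (p - 1)) (alpha w) = Tt w.
Proof.
  pose proof Hpz as Hpz.
  assert (E : csum (uu w) (p - 1) = Cdiv (Cplus (Wv w) (Cmult (RtoC (INR (p - 1))) (Tt w))) (Cminus (RtoC (INR p)) z)).
  { unfold uu. rewrite (csum_ext _ (fun i => Cmult (Cinv (Cminus (RtoC (INR p)) z)) (Cplus (w i) (Tt w)))).
    rewrite csum_scal, csum_plus, csum_const. unfold Wv, Cdiv. ring.
    intros; unfold Cdiv; ring. }
  rewrite E. rewrite INR_pm1 by lia. rewrite RtoC_minus.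
  unfold Tt, alpha, cc. unfold DeltaP in *. unfold Pr in *. rewrite RtoC_plus in *.
  field. split; auto.
Qed.

Lemma Gop_right w : l2 w -> forall i, Aop p z (Gop w) i = w i.
Proof.
  intros Hw i. unfold Gop.
  destruct (Nat.lt_ge_cases i (p - 1)).
  - rewrite A_build_low by auto. rewrite key_T. unfold uu. field. apply Hpz.
  - destruct (Nat.eq_dec i (p - 1)).
    + subst i. rewrite A_build_q by auto. rewrite key_T.
      unfold Tt. unfold Rv at 1. unfold cc. rewrite RtoC_plus. ring.
    + apply A_build_high; auto. lia.
Qed.

Lemma Wv_lin a u v : Wv (vadd (vscale a u) v) = Cplus (Cmult a (Wv u)) (Wv v).
Proof. unfold Wv. apply csum_lin. Qed.

Lemma Rv_lin a u v : l2 u -> l2 v -> Rv (vadd (vscale a u) v) = Cplus (Cmult a (Rv u)) (Rv v).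
Proof.
  intros Hu Hv. unfold Rv. rewrite fpath_lin, QS_lin; auto. unfold vadd, vscale. ring.
  apply l2_fpath; auto. apply l2_fpath; auto.
Qed.

Lemma alpha_lin a u v : l2 u -> l2 v -> alpha (vadd (vscale a u) v) = Cplus (Cmult a (alpha u)) (alpha v).
Proof. intros. unfold alpha. rewrite Wv_lin, Rv_lin by auto. field. auto. Qed.

Lemma Tt_lin a u v : l2 u -> l2 v -> Tt (vadd (vscale a u) v) = Cplus (Cmult a (Tt u)) (Tt v).
Proof. intros. unfold Tt. rewrite alpha_lin, Rv_lin by auto. ring. Qed.

Lemma Gop_lin a u v : l2 u -> l2 v -> Gop (vadd (vscale a u) v) = vadd (vscale a (Gop u)) (Gop v).
Proof.
  intros Hu Hv. apply functional_extensionality. intros i.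
  change (vadd (vscale a (Gop u)) (Gop v) i) with (Cplus (Cmult a (Gop u i)) (Gop v i)).
  unfold Gop, build. destruct (Nat.ltb i (p - 1)).
  - unfold uu. rewrite Tt_lin by auto.
    change (vadd (vscale a u) v i) with (Cplus (Cmult a (u i)) (v i)). field. apply Hpz.
  - rewrite fpath_lin, QS_lin, alpha_lin by (auto; apply l2_fpath; auto). ring.
Qed.

Definition KR : R := 1 + 2 * s r / (1 - s r).
Definition Ka : R := (INR (p - 1) + Cmod (Cminus (RtoC 1) z) * KR) / Cmod (DeltaP p z r).
Definition KT : R := Cmod (cc p z r) * Ka + KR.
Definition Ku : R := (1 + KT) / Cmod (Cminus (RtoC (INR p)) z).

Lemma KR_pos : 0 <= KR.
Proof. pose proof (s_bounds r Hr1). unfold KR. assert (0 <= 2 * s r / (1 - s r)) by (apply Rmult_le_pos; [lra|apply Rlt_le, Rinv_0_lt_compat; lra]). lra. Qed.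
Lemma Ka_pos : 0 <= Ka.
Proof.
  pose proof KR_pos. unfold Ka. apply Rmult_le_pos. pose proof (pos_INR (p-1)). pose proof (Cmod_ge_0 (Cminus (RtoC 1) z)). nra.
  apply Rlt_le, Rinv_0_lt_compat. apply Cmod_gt_0; auto.
Qed.
Lemma KT_pos : 0 <= KT.
Proof. pose proof KR_pos. pose proof Ka_pos. pose proof (Cmod_ge_0 (cc p z r)). unfold KT. nra. Qed.

Lemma Rv_bound w : l2 w -> Cmod (Rv w) <= KR * l2norm w.
Proof.
  intros Hw. unfold Rv, KR. eapply Rle_trans. apply Cmod_triangle.
  pose proof (Cmod_le_l2norm w (p - 1) Hw).
  pose proof (QS1_bound r (fpath p w) Hr1 (l2_fpath p w Hw)).
  assert (l2norm (fpath p w) <= l2norm w).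
  { unfold l2norm. apply sqrt_le_1_alt. apply S2_fpath; auto. }
  pose proof (s_bounds r Hr1).
  assert (0 <= 2 * s r / (1 - s r)) by (apply Rmult_le_pos; [lra|apply Rlt_le, Rinv_0_lt_compat; lra]).
  assert (2 * s r / (1 - s r) * l2norm (fpath p w) <= 2 * s r / (1 - s r) * l2norm w) by (apply Rmult_le_compat_l; auto).
  lra.
Qed.

Lemma alpha_bound w : l2 w -> Cmod (alpha w) <= Ka * l2norm w.
Proof.
  intros Hw. unfold alpha, Ka. rewrite Cmod_div by auto.
  assert (0 < Cmod (DeltaP p z r)) by (apply Cmod_gt_0; auto).
  apply Rle_trans with ((INR (p - 1) + Cmod (Cminus (RtoC 1) z) * KR) * l2norm w * / Cmod (DeltaP p z r)).
  2: { right. unfold Rdiv. ring. }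
  apply Rmult_le_compat_r. apply Rlt_le, Rinv_0_lt_compat; auto.
  eapply Rle_trans. apply Cmod_triangle. rewrite Cmod_mult.
  assert (Cmod (Wv w) <= INR (p - 1) * l2norm w).
  { unfold Wv. apply Cmod_csum_le. intros; apply Cmod_le_l2norm; auto. }
  pose proof (Rv_bound w Hw). pose proof (Cmod_ge_0 (Cminus (RtoC 1) z)).
  assert (Cmod (Cminus (RtoC 1) z) * Cmod (Rv w) <= Cmod (Cminus (RtoC 1) z) * (KR * l2norm w)) by (apply Rmult_le_compat_l; auto).
  nra.
Qed.

Lemma Tt_bound w : l2 w -> Cmod (Tt w) <= KT * l2norm w.
Proof.
  intros Hw. unfold Tt, KT. eapply Rle_trans. apply Cmod_minus_le. rewrite Cmod_mult.
  pose proof (alpha_bound w Hw). pose proof (Rv_bound w Hw). pose proof (Cmod_ge_0 (cc p z r)).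
  assert (Cmod (cc p z r) * Cmod (alpha w) <= Cmod (cc p z r) * (Ka * l2norm w)) by (apply Rmult_le_compat_l; auto).
  nra.
Qed.

Lemma uu_bound w i : l2 w -> Cmod (uu w i) <= Ku * l2norm w.
Proof.
  intros Hw. unfold uu, Ku. rewrite Cmod_div by apply Hpz.
  assert (0 < Cmod (Cminus (RtoC (INR p)) z)) by (apply Cmod_gt_0; apply Hpz).
  apply Rle_trans with ((1 + KT) * l2norm w * / Cmod (Cminus (RtoC (INR p)) z)).
  2: { right. unfold Rdiv. ring. }
  apply Rmult_le_compat_r. apply Rlt_le, Rinv_0_lt_compat; auto.
  eapply Rle_trans. apply Cmod_triangle. pose proof (Cmod_le_l2norm w i Hw). pose proof (Tt_bound w Hw). lra.
Qed.

Definition KG : R := 3 * (INR (p - 1) * Ku ^ 2 + KQ r + Ka ^ 2 / (1 - s r ^ 2)).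

Lemma Gop_S2 w : l2 w -> l2 (Gop w) /\ S2 (Gop w) <= KG * S2 w.
Proof.
  intros Hw. destruct (build_l2 p Hp r Hr1 (uu w) (alpha w) w Hw) as [Hl HS]. split; auto.
  eapply Rle_trans. exact HS. unfold KG.
  assert (HB : l2norm w ^ 2 = S2 w) by (unfold l2norm; rewrite pow2_sqrt; auto; apply S2_nonneg; auto).
  assert (H0 : 0 <= l2norm w) by apply sqrt_pos.
  assert (H1 : psum (sq (uu w)) (p - 1) <= INR (p - 1) * Ku ^ 2 * S2 w).
  { eapply Rle_trans. apply psum_le with (b := fun _ => Ku ^ 2 * S2 w).
    intros k _. unfold sq. rewrite <- HB, <- Rpow_mult_distr. apply sq_mono. apply Cmod_ge_0. apply uu_bound; auto.
    rewrite psum_const. right. ring. }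
  assert (H2 : Cmod (alpha w) ^ 2 <= Ka ^ 2 * S2 w).
  { rewrite <- HB, <- Rpow_mult_distr. apply sq_mono. apply Cmod_ge_0. apply alpha_bound; auto. }
  pose proof (s_bounds r Hr1).
  assert (H3 : 0 < 1 - s r ^ 2) by nra.
  assert (Cmod (alpha w) ^ 2 / (1 - s r ^ 2) <= Ka ^ 2 * S2 w / (1 - s r ^ 2)).
  { unfold Rdiv. apply Rmult_le_compat_r; auto. apply Rlt_le, Rinv_0_lt_compat; auto. }
  replace (Ka ^ 2 * S2 w / (1 - s r ^ 2)) with (Ka ^ 2 / (1 - s r ^ 2) * S2 w) in H by (field; lra).
  nra.
Qed.

Lemma KG_pos : 0 <= KG.
Proof.
  pose proof (s_bounds r Hr1). pose proof (Kg_nonneg r Hr1). unfold KG, KQ.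
  assert (0 <= INR (p - 1) * Ku ^ 2) by (apply Rmult_le_pos; [apply pos_INR|apply pow2_ge_0]).
  assert (0 <= s r ^ 2 * Kg r / (1 - s r) ^ 2).
  { apply Rmult_le_pos. apply Rmult_le_pos; auto. apply pow2_ge_0. apply Rlt_le, Rinv_0_lt_compat, pow_lt; lra. }
  assert (0 <= Ka ^ 2 / (1 - s r ^ 2)).
  { apply Rmult_le_pos. apply pow2_ge_0. apply Rlt_le, Rinv_0_lt_compat. nra. }
  lra.
Qed.

Lemma Gop_bounded : bounded_op Gop.
Proof.
  assert (H : forall v, l2 v -> forall N, psum (sq (Gop v)) N <= KG * S2 v).
  { intros v Hv N. destruct (Gop_S2 v Hv). eapply Rle_trans; [|exact H0]. apply psum_sq_le_S2; auto. }
  destruct (op_bound Gop KG KG_pos H) as [H1 H2]. split; auto. split; auto.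
  intros. apply Gop_lin; auto.
Qed.

Lemma resolvent : has_bounded_inverse (Aop p z).
Proof.
  exists Gop. split; [apply Gop_bounded|]. split.
  - intros v Hv. set (x := vsub (Gop (Aop p z v)) v).
    assert (Hx : l2 x). { apply l2_sub; auto. apply Gop_S2. apply Aop_l2; auto. lia. }
    assert (HA : forall i, Aop p z x i = RtoC 0).
    { intros i. unfold x. rewrite Aop_sub, Gop_right. ring. apply Aop_l2; auto. lia. }
    assert (Hb : x (p - 1)%nat = RtoC 0).
    { pose proof (kernel_Delta p Hp z r Hr0 ltac:(lra) Hz x Hx HA Hzp). apply Cmult_integral in H.
      destruct H; auto. contradiction. }
    pose proof (kernel_zero p Hp z r Hr0 ltac:(lra) Hz x Hx HA Hzp Hb) as H0.
    apply functional_extensionality. intros i. apply (f_equal (fun f => f i)) in H0.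
    unfold x, vsub, vzero in H0. apply Ceq_minus in H0. auto.
  - intros v Hv. apply functional_extensionality. intros i. apply Gop_right; auto.
Qed.

End Resolvent.

Lemma Aop_eigen p z v : Lap p v = vscale z v -> forall i, Aop p z v i = RtoC 0.
Proof. intros H i. rewrite Aop_eq, H. unfold vscale. ring. Qed.

Lemma eigen_of_Aop p z v : (forall i, Aop p z v i = RtoC 0) -> Lap p v = vscale z v.
Proof.
  intros H. apply functional_extensionality. intros i. specialize (H i). rewrite Aop_eq in H.
  apply Ceq_minus in H. auto.
Qed.

Lemma B_vzero (B : Op) : bounded_op B -> B vzero = vzero.
Proof.
  intros [_ [Hlin _]]. specialize (Hlin (RtoC (-1)) vzero vzero l2_vzero l2_vzero).
  assert (E : vadd (vscale (RtoC (-1)) vzero) vzero = vzero).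
  { apply functional_extensionality. intros i. unfold vadd, vscale, vzero. ring. }
  rewrite E in Hlin. apply functional_extensionality. intros i.
  apply (f_equal (fun f => f i)) in Hlin. unfold vadd, vscale, vzero in *.
  rewrite Hlin. ring.
Qed.

Lemma eigen_not_inv p z v : l2 v -> v <> vzero -> (forall i, Aop p z v i = RtoC 0) ->
  ~ has_bounded_inverse (Aop p z).
Proof.
  intros Hv Hn HA [B [HB [H1 H2]]].
  assert (E : Aop p z v = vzero) by (apply functional_extensionality; intros; apply HA).
  specialize (H1 v Hv). rewrite E, B_vzero in H1 by auto. auto.
Qed.

Definition e01 (i : nat) : C :=
  Cminus (if Nat.eqb i 0 then RtoC 1 else RtoC 0) (if Nat.eqb i 1 then RtoC 1 else RtoC 0).

Lemma e01_l2 : l2 e01.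
Proof.
  apply (l2_finite _ 2). intros i Hi. unfold e01.
  destruct (Nat.eqb_spec i 0); [lia|]. destruct (Nat.eqb_spec i 1); [lia|]. ring.
Qed.

Lemma e01_nz : e01 <> vzero.
Proof.
  intros E. apply (f_equal (fun f => f O)) in E. unfold e01, vzero in E. simpl in E.
  injection E. lra.
Qed.

Lemma csum_e01 n : (2 <= n)%nat -> csum e01 n = RtoC 0.
Proof.
  intros Hn. unfold e01. rewrite csum_minus.
  rewrite (csum_delta (fun _ => RtoC 1) 0 n), (csum_delta (fun _ => RtoC 1) 1 n). destruct (Nat.ltb_spec 0 n); [|lia]. destruct (Nat.ltb_spec 1 n); [|lia]. ring.
Qed.

Lemma e01_eigen p : (5 <= p)%nat -> forall i, Aop p (RtoC (INR p)) e01 i = RtoC 0.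
Proof.
  intros Hp i. rewrite Aop_eq. destruct (Nat.lt_ge_cases i p).
  - rewrite Lap_low by lia. rewrite csum_e01 by lia.
    destruct (Nat.eqb_spec i (p - 1)).
    + subst i. unfold e01. destruct (Nat.eqb_spec (p-1) 0); [lia|]. destruct (Nat.eqb_spec (p-1) 1); [lia|].
      destruct (Nat.eqb_spec p 0); [lia|]. destruct (Nat.eqb_spec p 1); [lia|]. ring.
    + ring.
  - rewrite Lap_high by lia. unfold e01.
    destruct (Nat.eqb_spec i 0); [lia|]. destruct (Nat.eqb_spec i 1); [lia|].
    destruct (Nat.eqb_spec (i-1) 0); [lia|]. destruct (Nat.eqb_spec (i-1) 1); [lia|].
    destruct (Nat.eqb_spec (S i) 0); [lia|]. destruct (Nat.eqb_spec (S i) 1); [lia|]. ring.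
Qed.

Section LamVec.
Variable p : nat.
Hypothesis Hp : (5 <= p)%nat.

Definition zl : C := RtoC (lamS p).
Definition rl : C := RtoC (rm p).

Lemma rl_nz : rl <> RtoC 0.
Proof. unfold rl. intros E. injection E. apply rm_neq0; auto. Qed.

Lemma rl_lt1 : Cmod rl < 1.
Proof. unfold rl. rewrite Cmod_R. pose proof (rm_bounds p Hp). pose proof (rm_gt_m1 p Hp). rewrite Rabs_left; lra. Qed.

Lemma rl_root : Cminus (RtoC 2) zl = Cplus rl (Cinv rl).
Proof.
  unfold zl, rl. rewrite <- RtoC_inv by (apply rm_neq0; auto). rewrite <- RtoC_minus, <- RtoC_plus.
  f_equal. apply lamstar_root; auto.
Qed.

Lemma zl_neq_p : zl <> RtoC (INR p).
Proof. unfold zl. intros E. injection E. pose proof (lamstar_bounds p Hp). unfold Pr in *. lra. Qed.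

Lemma Delta_zl : DeltaP p zl rl = RtoC 0.
Proof. apply Delta_lamstar; auto. Qed.

Definition kap : C := Cdiv (cc p zl rl) (Cminus (RtoC (INR p)) zl).
Definition phi : nat -> C := build p rl (fun _ => kap) (RtoC 1) vzero.

Lemma QS_vzero r k : QS r (fpath p vzero) k = RtoC 0.
Proof.
  induction k; simpl. auto. rewrite IHk.
  assert (gS r (fpath p vzero) k = RtoC 0).
  { unfold gS. rewrite (CSer_ext _ (fun _ => RtoC 0)). apply CSer_zero. intros. unfold fpath, vzero. ring. }
  rewrite H. ring.
Qed.

Lemma phi_l2 : l2 phi.
Proof. apply (build_l2 p Hp rl rl_lt1). apply l2_vzero. Qed.

Lemma phi_q : phi (p - 1)%nat = RtoC 1.
Proof.
  unfold phi. replace (p - 1)%nat with (p - 1 + 0)%nat by lia. rewrite build_path.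
  rewrite QS_vzero. simpl. ring. auto.
Qed.

Lemma phi_nz : phi <> vzero.
Proof.
  intros E. pose proof phi_q. rewrite E in H. unfold vzero in H. injection H. lra.
Qed.

Lemma phi_eigen : forall i, Aop p zl phi i = RtoC 0.
Proof.
  assert (Hpz : Cminus (RtoC (INR p)) zl <> RtoC 0) by (intros E; apply zl_neq_p; apply Ceq_minus in E; auto).
  pose proof Delta_zl as HD. unfold DeltaP, Pr in HD.
  assert (E : Cminus (Cminus (cc p zl rl) (Cmult (RtoC (INR (p - 1))) kap)) (RtoC 1) = RtoC 0).
  { rewrite INR_pm1 by lia. rewrite RtoC_minus. unfold kap, cc. rewrite RtoC_plus in *.
    transitivity (Cdiv (Cminus (Cmult (Cminus (RtoC 1) zl) (Cminus (Cminus (Cplus (RtoC (INR p)) (RtoC 1)) zl) rl))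
          (Cminus (RtoC (INR p)) zl)) (Cminus (RtoC (INR p)) zl)).
    field. auto. rewrite HD. field. auto. }
  intros i. unfold phi. destruct (Nat.lt_ge_cases i (p - 1)).
  - rewrite A_build_low by auto. rewrite csum_const. rewrite <- E at 1. unfold kap. field. auto.
  - destruct (Nat.eq_dec i (p - 1)).
    + subst i. rewrite A_build_q by auto. rewrite QS_vzero, csum_const.
      match goal with |- ?X = _ => transitivity (Cminus (Cminus (cc p zl rl) (Cmult (RtoC (INR (p - 1))) kap)) (RtoC 1)) end.
      unfold cc. rewrite !RtoC_plus. ring. exact E.
    + rewrite A_build_high; auto. apply rl_nz. apply rl_lt1. apply rl_root. lia. apply l2_vzero.
Qed.

End LamVec.

Lemma point_spec_char p z : (5 <= p)%nat ->
  (point_spectrum (Lap p) z <-> (z = RtoC (lamS p) \/ z = RtoC (INR p))).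
Proof.
  intros Hp. split.
  - intros [v [Hv [Hn He]]]. pose proof (Aop_eigen p z v He) as HA.
    destruct (Ceq_dec z (RtoC (INR p))) as [Ep|Ep]; [right; auto|left].
    destruct (root_exists z) as [r [Hr0 [Hr1 Hz]]].
    pose proof (kernel_Delta p Hp z r Hr0 Hr1 Hz v Hv HA Ep) as HD.
    apply Cmult_integral in HD. destruct HD as [HD|HD].
    + destruct (Req_dec (Cmod r) 1) as [E1|E1].
      * exfalso. pose proof (kernel_path_unit p z r v Hp Hr0 E1 Hz Hv (fun i _ => HA i) 0).
        rewrite Nat.add_0_r in H. apply Hn. apply (kernel_zero p Hp z r Hr0 Hr1 Hz v Hv HA Ep H).
      * apply (Delta_root p Hp z r Hr0 ltac:(lra) Hz HD).
    + exfalso. apply Hn. apply (kernel_zero p Hp z r Hr0 Hr1 Hz v Hv HA Ep HD).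
  - intros [E|E].
    + exists (phi p). split. apply phi_l2; auto. split. apply phi_nz; auto.
      subst z. apply eigen_of_Aop. apply phi_eigen; auto.
    + exists e01. split. apply e01_l2. split. apply e01_nz. subst z. apply eigen_of_Aop. apply e01_eigen; auto.
Qed.

Lemma ln_step (x : R) : 0 < x -> ln (x + 1) - ln x <= / x.
Proof.
  intros Hx. rewrite <- ln_div by lra.
  replace ((x + 1) / x) with (1 + / x) by (field; lra).
  rewrite <- (ln_exp (/ x)) at 2. apply ln_le. pose proof (Rinv_0_lt_compat x Hx). lra.
  apply exp_ineq1_le.
Qed.

Lemma harmonic_div (m : nat) : (1 <= m)%nat -> ~ ex_series (fun k => / INR (m + k)).
Proof.
  intros Hm Hex.
  assert (Hpos : forall k, 0 <= / INR (m + k)).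
  { intros k. apply Rlt_le, Rinv_0_lt_compat. apply lt_0_INR. lia. }
  assert (Hlow : forall N, ln (INR (m + N)) - ln (INR m) <= psum (fun k => / INR (m + k)) N).
  { induction N. rewrite Nat.add_0_r. simpl. lra.
    simpl psum. replace (m + S N)%nat with (S (m + N)) by lia. rewrite S_INR.
    pose proof (ln_step (INR (m + N)) ltac:(apply lt_0_INR; lia)). lra. }
  set (M := Series (fun k => / INR (m + k))).
  assert (HM : forall N, psum (fun k => / INR (m + k)) N <= M) by (intros; apply psum_le_Series; auto).
  destruct (INR_archimed 1 (exp (M + 1 + ln (INR m)))) as [N HN]. lra.
  specialize (Hlow N). specialize (HM N).
  assert (exp (M + 1 + ln (INR m)) < INR (m + N)).
  { rewrite plus_INR. pose proof (pos_INR m). lra. }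
  apply ln_increasing in H. rewrite ln_exp in H. lra. apply exp_pos.
Qed.

Lemma is_lim_seq_invn : is_lim_seq (fun n => / INR n) 0.
Proof.
  replace (Finite 0) with (Rbar_inv p_infty) by reflexivity.
  apply is_lim_seq_inv. apply is_lim_seq_INR. discriminate.
Qed.

Definition cS (i : nat) : R := / sqrt (INR i).

Lemma cS_pos i : (1 <= i)%nat -> 0 < cS i.
Proof. intros. unfold cS. apply Rinv_0_lt_compat, sqrt_lt_R0, lt_0_INR. lia. Qed.

Lemma cS_sq i : (1 <= i)%nat -> cS i ^ 2 = / INR i.
Proof.
  intros Hi. unfold cS. rewrite pow_inv. f_equal. rewrite pow2_sqrt. auto. apply pos_INR.
Qed.

Lemma cS_diff n : (1 <= n)%nat -> 0 <= cS n - cS (S n) <= / INR n.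
Proof.
  intros Hn. unfold cS. rewrite S_INR.
  set (x := INR n). assert (Hx : 1 <= x) by (unfold x; replace 1 with (INR 1) by reflexivity; apply le_INR; auto).
  set (a := sqrt x). set (b := sqrt (x + 1)).
  assert (Ha : a * a = x) by (apply sqrt_sqrt; lra). assert (Hb : b * b = x + 1) by (apply sqrt_sqrt; lra).
  assert (Ha0 : 0 < a) by (apply sqrt_lt_R0; lra). assert (Hb0 : 0 < b) by (apply sqrt_lt_R0; lra).
  assert (Hab : a <= b) by (apply sqrt_le_1_alt; lra).
  assert (Hb1 : b <= a + 1) by nra.
  replace (/ a - / b) with ((b - a) / (a * b)) by (field; lra).
  split. apply Rmult_le_pos. lra. apply Rlt_le, Rinv_0_lt_compat. nra.
  apply Rle_trans with (/ (a * b)).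
  unfold Rdiv; rewrite <- (Rmult_1_l (/ (a * b))) at 2; apply Rmult_le_compat_r; [apply Rlt_le, Rinv_0_lt_compat; nra | lra].
  apply Rinv_le_contravar; nra.
Qed.

Lemma is_lim_seq_cS : is_lim_seq cS 0.
Proof.
  apply is_lim_seq_ext with (fun n => sqrt (/ INR n)). intros; unfold cS; apply sqrt_inv.
  apply is_lim_seq_sqrt0. intros n. destruct n. simpl. rewrite Rinv_0. lra.
  apply Rlt_le, Rinv_0_lt_compat, lt_0_INR. lia. apply is_lim_seq_invn.
Qed.

Lemma psum_tail_le (a : nat -> R) m N : (forall k, 0 <= a k) -> ex_series a ->
  psum (fun i => if Nat.leb m i then a i else 0) N <= Series a - psum a m.
Proof.
  intros Hpos Hex.
  destruct (Nat.le_gt_cases N m).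
  - rewrite (psum_ext _ (fun _ => 0 * 0)). rewrite psum_scal.
    pose proof (psum_le_Series a m Hpos Hex). lra.
    intros k Hk. destruct (Nat.leb_spec m k); [lia|ring].
  - replace N with (m + (N - m))%nat by lia. rewrite psum_add.
    rewrite (psum_ext (fun i => if Nat.leb m i then a i else 0) (fun _ => 0 * 0)) by (intros k Hk; destruct (Nat.leb_spec m k); [lia|ring]).
    rewrite psum_scal.
    rewrite (psum_ext (fun k => if Nat.leb m (m + k) then a (m + k)%nat else 0) (fun k => a (m + k)%nat)) by (intros k _; destruct (Nat.leb_spec m (m+k)); [auto|lia]).
    pose proof (psum_le_Series a (m + (N - m)) Hpos Hex). rewrite psum_add in H0. lra.
Qed.

Lemma psum_delta_le (c : R) a N : 0 <= c -> psum (fun i => if Nat.eqb i a then c else 0) N <= c.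
Proof.
  intros Hc. induction N; simpl psum. lra.
  destruct (Nat.eqb_spec N a).
  - subst. assert (psum (fun i => if Nat.eqb i a then c else 0) a = 0).
    { rewrite (psum_ext _ (fun _ => 0 * 0)). rewrite psum_scal. ring. intros k Hk. destruct (Nat.eqb_spec k a); [lia|ring]. }
    lra.
  - lra.
Qed.

Lemma to0_sq v : to0 v -> is_lim_seq (sq v) 0.
Proof.
  intros H. apply is_lim_seq_ext with (fun n => Cmod (v n) * Cmod (v n)).
  intros n. unfold sq. ring. replace (Finite 0) with (Finite (0 * 0)) by (f_equal; ring).
  apply is_lim_seq_mult'; auto.
Qed.

Definition trunc (K : nat) (v : nat -> C) : nat -> C := fun i => if Nat.ltb i K then v i else RtoC 0.

Lemma trunc_l2 K v : l2 (trunc K v).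
Proof. apply (l2_finite _ K). intros i Hi. unfold trunc. destruct (Nat.ltb_spec i K); [lia|auto]. Qed.

Section Interval.
Variable p : nat.
Hypothesis Hp : (5 <= p)%nat.
Variables z r : C.
Hypothesis Hr0 : r <> RtoC 0.
Hypothesis Hr1 : Cmod r = 1.
Hypothesis Hz : Cminus (RtoC 2) z = Cplus r (Cinv r).

Definition vc (i : nat) : C := if Nat.ltb i p then RtoC 0 else Cmult (Cpow r i) (RtoC (cS i)).
Definition wc : nat -> C := Aop p z vc.

Lemma vc_high i : (p <= i)%nat -> vc i = Cmult (Cpow r i) (RtoC (cS i)).
Proof. intros. unfold vc. destruct (Nat.ltb_spec i p); [lia|auto]. Qed.

Lemma Cmod_vc i : (p <= i)%nat -> Cmod (vc i) = cS i.
Proof.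
  intros Hi. rewrite vc_high, Cmod_mult, Cmod_pow, Hr1, pow1, Cmod_R by auto.
  rewrite Rabs_pos_eq. ring. apply Rlt_le, cS_pos. lia.
Qed.

Lemma cS_nonneg i : 0 <= cS i.
Proof. unfold cS. destruct i. simpl. rewrite sqrt_0, Rinv_0. lra. apply Rlt_le, cS_pos. lia. Qed.

Lemma vc_to0 : to0 vc.
Proof.
  apply to0_le with cS. intros i. destruct (Nat.lt_ge_cases i p).
  unfold vc. destruct (Nat.ltb_spec i p); [|lia]. rewrite Cmod_0. apply cS_nonneg.
  rewrite Cmod_vc by auto. lra. apply is_lim_seq_cS.
Qed.

Lemma Ez : z = Cminus (Cminus (RtoC 2) r) (Cinv r).
Proof. transitivity (Cminus (RtoC 2) (Cminus (RtoC 2) z)); [ring|]. rewrite Hz. ring. Qed.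

Lemma wc_bound j : (p <= j)%nat -> Cmod (wc (S j)) <= 2 / INR j.
Proof.
  intros Hj. unfold wc. rewrite Aop_eq, Lap_high by lia. replace (S j - 1)%nat with j by lia.
  rewrite !vc_high by lia.
  assert (E : Cminus (Cminus (Cminus (Cmult (RtoC 2) (Cmult (Cpow r (S j)) (RtoC (cS (S j)))))
                 (Cmult (Cpow r j) (RtoC (cS j)))) (Cmult (Cpow r (S (S j))) (RtoC (cS (S (S j))))))
                 (Cmult z (Cmult (Cpow r (S j)) (RtoC (cS (S j)))))
            = Cmult (Cpow r j) (Cplus (Cmult (Cmult r r) (RtoC (cS (S j) - cS (S (S j)))))
                                      (RtoC (cS (S j) - cS j)))).
  { rewrite Ez. rewrite !RtoC_minus. simpl Cpow. field. auto. }
  rewrite E. rewrite Cmod_mult, Cmod_pow, Hr1, pow1, Rmult_1_l.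
  eapply Rle_trans. apply Cmod_triangle. rewrite Cmod_mult, Cmod_mult, Hr1, !Cmod_R.
  pose proof (cS_diff (S j) ltac:(lia)). pose proof (cS_diff j ltac:(lia)).
  rewrite Rabs_pos_eq by lra. rewrite Rabs_left1 by lra.
  assert (/ INR (S j) <= / INR j). { apply Rinv_le_contravar. apply lt_0_INR; lia. apply le_INR; lia. }
  unfold Rdiv. lra.
Qed.

Lemma wc_sq_bound i : (p + 1 <= i)%nat -> sq wc i <= 8 * (/ INR (i - 1) - / INR i).
Proof.
  intros Hi. destruct i as [|j]. lia. replace (S j - 1)%nat with j by lia.
  unfold sq. assert (Hj : 1 <= INR j) by (replace 1 with (INR 1) by reflexivity; apply le_INR; lia).
  eapply Rle_trans. apply sq_mono. apply Cmod_ge_0. apply wc_bound. lia.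
  rewrite S_INR. replace (/ INR j - / (INR j + 1)) with (/ (INR j * (INR j + 1))) by (field; lra).
  unfold Rdiv. rewrite Rpow_mult_distr, pow_inv.
  assert (/ (INR j ^ 2) <= 2 * / (INR j * (INR j + 1))).
  { rewrite <- (Rmult_1_l (/ (INR j ^ 2))). replace 2 with (2 * 1) by ring.
    apply Rmult_le_reg_r with (INR j ^ 2 * (INR j * (INR j + 1))). nra.
    field_simplify; try nra. }
  nra.
Qed.

Lemma wc_l2 : l2 wc.
Proof.
  assert (Hind : forall N, psum (sq wc) (p + 1 + N) <= psum (sq wc) (p + 1) + 8 * (/ INR p - / INR (p + N))).
  { induction N. rewrite !Nat.add_0_r. lra.
    replace (p + 1 + S N)%nat with (S (p + 1 + N)) by lia. simpl psum.
    pose proof (wc_sq_bound (p + 1 + N) ltac:(lia)). replace (p + 1 + N - 1)%nat with (p + N)%nat in H by lia.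
    replace (p + S N)%nat with (p + 1 + N)%nat by lia. lra. }
  apply (l2_bound _ (psum (sq wc) (p + 1) + 8 * / INR p)). intros N.
  eapply Rle_trans. apply (psum_mono (sq wc) N (p + 1 + N)). apply sq_nonneg. lia.
  eapply Rle_trans. apply Hind. assert (0 < / INR (p + N)) by (apply Rinv_0_lt_compat, lt_0_INR; lia). lra.
Qed.

Lemma vc_tail_not_l2 : ~ ex_series (fun k => sq vc (p + k)).
Proof.
  intros H. apply (harmonic_div p ltac:(lia)). eapply ex_series_ext; [|exact H].
  intros k. simpl. unfold sq. rewrite Cmod_vc by lia. apply cS_sq. lia.
Qed.

Lemma wc_not_range x : l2 x -> wc = Aop p z x -> False.
Proof.
  intros Hx E. set (y := vsub vc x).
  assert (Hy : to0 y) by (apply to0_sub; [apply vc_to0|apply to0_l2; auto]).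
  assert (HA : forall i, (p <= i)%nat -> Aop p z y i = RtoC 0).
  { intros i _. unfold y. rewrite Aop_sub. fold wc. rewrite <- E. ring. }
  pose proof (kernel_path_unit_to0 p z r y Hp Hr0 Hr1 Hz Hy HA) as H0.
  apply vc_tail_not_l2. unfold l2 in Hx. apply (ex_series_incr_n _ p) in Hx.
  eapply ex_series_ext; [|exact Hx]. intros k.
  specialize (H0 (S k)). unfold y, vsub in H0. replace (p - 1 + S k)%nat with (p + k)%nat in H0 by lia.
  apply Ceq_minus in H0. cbv beta. unfold sq. rewrite H0. reflexivity.
Qed.

Definition bnd (K i : nat) : R :=
  (if Nat.eqb i (K - 1) then sq vc K else 0) +
  (if Nat.eqb i K then 2 * sq wc K + 2 * sq vc (K - 1) else 0) +
  (if Nat.leb (S K) i then sq wc i else 0).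

Lemma bnd_nonneg K i : 0 <= bnd K i.
Proof.
  unfold bnd. pose proof (sq_nonneg vc K). pose proof (sq_nonneg wc K). pose proof (sq_nonneg vc (K-1)).
  pose proof (sq_nonneg wc i).
  destruct (Nat.eqb i (K-1)); destruct (Nat.eqb i K); destruct (Nat.leb (S K) i); lra.
Qed.

Lemma diff_bound K i : (p + 2 <= K)%nat ->
  sq (fun i => Cminus (Aop p z (trunc K vc) i) (wc i)) i <= bnd K i.
Proof.
  intros HK. unfold sq at 1. unfold wc. rewrite <- Aop_sub.
  set (e := vsub (trunc K vc) vc).
  assert (He : forall j, e j = if Nat.ltb j K then RtoC 0 else Copp (vc j)).
  { intros j. unfold e, vsub, trunc. destruct (Nat.ltb j K); ring. }
  pose proof (bnd_nonneg K i) as Hb.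
  destruct (Nat.lt_ge_cases i p).
  - rewrite Aop_eq, Lap_low by lia.
    rewrite (csum_ext _ (fun _ => RtoC 0)) by (intros j Hj; rewrite He; destruct (Nat.ltb_spec j K); [auto|lia]).
    rewrite csum_zero. rewrite !He.
    destruct (Nat.ltb_spec i K); [|lia]. destruct (Nat.ltb_spec p K); [|lia].
    replace (Cminus (Cplus (Cminus (Cmult (RtoC (INR p)) (RtoC 0)) (RtoC 0))
       (if Nat.eqb i (p - 1) then Cminus (RtoC 0) (RtoC 0) else RtoC 0)) (Cmult z (RtoC 0))) with (RtoC 0)
       by (destruct (Nat.eqb i (p-1)); ring).
    rewrite Cmod_0. replace (0 ^ 2) with 0 by ring. auto.
  - rewrite Aop_eq, Lap_high by lia. rewrite !He. unfold bnd.
    destruct (Nat.ltb_spec i K); destruct (Nat.ltb_spec (i - 1) K); destruct (Nat.ltb_spec (S i) K);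
    destruct (Nat.eqb_spec i (K - 1)); destruct (Nat.eqb_spec i K); destruct (Nat.leb_spec (S K) i); try lia.
    + (* all zero *)
      replace (Cminus (Cminus (Cminus (Cmult (RtoC 2) (RtoC 0)) (RtoC 0)) (RtoC 0)) (Cmult z (RtoC 0))) with (RtoC 0) by ring.
      rewrite Cmod_0. replace (0 ^ 2) with 0 by ring. lra.
    + (* i = K - 1 *)
      replace (S i) with K by lia.
      replace (Cminus (Cminus (Cminus (Cmult (RtoC 2) (RtoC 0)) (RtoC 0)) (Copp (vc K))) (Cmult z (RtoC 0))) with (vc K) by ring.
      pose proof (sq_nonneg wc K). pose proof (sq_nonneg vc (K-1)). unfold sq. lra.
    + (* i = K *)
      subst i. 
      replace (Cminus (Cminus (Cminus (Cmult (RtoC 2) (Copp (vc K))) (RtoC 0)) (Copp (vc (S K)))) (Cmult z (Copp (vc K))))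
        with (Copp (Cplus (Aop p z vc K) (vc (K - 1)%nat))).
      2: { rewrite Aop_eq, Lap_high by lia. ring. }
      rewrite Cmod_opp. eapply Rle_trans. apply sq_add_le. fold (sq (Aop p z vc) K). fold wc. unfold sq. lra.
    + (* i > K *)
      replace (Cminus (Cminus (Cminus (Cmult (RtoC 2) (Copp (vc i))) (Copp (vc (i - 1)%nat))) (Copp (vc (S i)))) (Cmult z (Copp (vc i))))
        with (Copp (Aop p z vc i)) by (rewrite Aop_eq, Lap_high by lia; ring).
      rewrite Cmod_opp. fold wc. unfold sq. lra.
Qed.

Lemma not_closed : ~ closed_range (Aop p z).
Proof.
  intros Hcl.
  set (u := fun k => Aop p z (trunc (k + p + 2) vc)).
  set (beta := fun k => sq vc (k + p + 2)%nat + (2 * sq wc (k + p + 2)%nat + 2 * sq vc (k + p + 2 - 1)%nat)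
                        + (S2 wc - psum (sq wc) (S (k + p + 2)))).
  assert (Hbeta : is_lim_seq beta 0).
  { unfold beta. replace (Finite 0) with (Finite (0 + (2 * 0 + 2 * 0) + (S2 wc - S2 wc))) by (f_equal; ring).
    pose proof (to0_sq vc vc_to0) as H1. pose proof (to0_sq wc (to0_l2 wc wc_l2)) as H2.
    pose proof (psum_to_Series (sq wc) wc_l2) as H3.
    apply is_lim_seq_plus'. apply is_lim_seq_plus'.
    - apply (is_lim_seq_incr_n (sq vc) (p + 2)) in H1. eapply is_lim_seq_ext; [|exact H1]. intros n; cbv beta; f_equal; lia.
    - apply is_lim_seq_plus'.
      + apply (is_lim_seq_incr_n (sq wc) (p + 2)) in H2.
        replace (Finite (2 * 0)) with (Rbar_mult 2 0) by (simpl; f_equal; ring). apply is_lim_seq_scal_l.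
        eapply is_lim_seq_ext; [|exact H2]. intros n; cbv beta; f_equal; lia.
      + apply (is_lim_seq_incr_n (sq vc) (p + 1)) in H1.
        replace (Finite (2 * 0)) with (Rbar_mult 2 0) by (simpl; f_equal; ring). apply is_lim_seq_scal_l.
        eapply is_lim_seq_ext; [|exact H1]. intros n; cbv beta; f_equal; lia.
    - apply is_lim_seq_minus'. apply is_lim_seq_const.
      apply (is_lim_seq_incr_n (psum (sq wc)) (p + 3)) in H3.
      eapply is_lim_seq_ext; [|exact H3]. intros n; cbv beta; f_equal; lia. }
  assert (HS : forall k, S2 (vsub (u k) wc) <= beta k /\ l2 (vsub (u k) wc)).
  { intros k. assert (Hl : forall N, psum (sq (vsub (u k) wc)) N <= beta k).
    { intros N. eapply Rle_trans. apply psum_le. intros i _. apply (diff_bound (k + p + 2)). lia.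
      unfold bnd. rewrite !psum_plus.
      pose proof (psum_delta_le (sq vc (k + p + 2)%nat) (k + p + 2 - 1) N (sq_nonneg _ _)).
      pose proof (psum_delta_le (2 * sq wc (k + p + 2)%nat + 2 * sq vc (k + p + 2 - 1)%nat) (k + p + 2) N
        ltac:(pose proof (sq_nonneg wc (k+p+2)%nat); pose proof (sq_nonneg vc (k + p + 2 - 1)%nat); lra)).
      pose proof (psum_tail_le (sq wc) (S (k + p + 2)) N (sq_nonneg wc) wc_l2).
      unfold beta. fold (S2 wc) in H1. lra. }
    destruct (l2_bound _ _ Hl). split; auto. }
  assert (Hlim : is_lim_seq (fun k => l2norm (vsub (u k) wc)) 0).
  { apply is_lim_seq_le_le with (fun _ => 0) (fun k => sqrt (beta k)).
    - intros k. split. apply sqrt_pos. unfold l2norm. apply sqrt_le_1_alt. apply HS.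
    - apply is_lim_seq_const.
    - apply is_lim_seq_sqrt0; auto. intros k. unfold beta.
      pose proof (sq_nonneg vc (k + p + 2)%nat). pose proof (sq_nonneg wc (k + p + 2)%nat).
      pose proof (sq_nonneg vc (k + p + 2 - 1)%nat).
      pose proof (psum_le_Series (sq wc) (S (k + p + 2)) (sq_nonneg wc) wc_l2). fold (S2 wc) in H2. lra. }
  destruct (Hcl u wc) as [x [Hx E]].
  - intros k. exists (trunc (k + p + 2) vc). split. apply trunc_l2. reflexivity.
  - apply wc_l2.
  - exact Hlim.
  - apply (wc_not_range x Hx E).
Qed.

Lemma not_invertible : ~ has_bounded_inverse (Aop p z).
Proof.
  intros [B [HB [H1 H2]]]. apply (wc_not_range (B wc)). apply HB. apply wc_l2.
  symmetry. apply H2. apply wc_l2.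
Qed.

End Interval.

Definition fsum (c : nat -> C) (W : nat -> nat -> C) (m : nat) : nat -> C :=
  fun x => csum (fun j => Cmult (c j) (W j x)) m.

Definition sk (k i : nat) : nat := if Nat.ltb i k then i else S i.

Lemma csum_shift0 f n : csum f (S n) = Cplus (f O) (csum (fun j => f (S j)) n).
Proof. induction n. simpl. ring. rewrite csum_split_last, IHn. simpl. ring. Qed.

Lemma csum_skip f m k : (k < m)%nat -> csum f m = Cplus (f k) (csum (fun i => f (sk k i)) (m - 1)).
Proof.
  induction m; intros Hk. lia.
  destruct (Nat.eq_dec k m).
  - subst. simpl csum at 1. replace (S m - 1)%nat with m by lia.
    rewrite (csum_ext (fun i => f (sk m i)) f). ring.
    intros i Hi. unfold sk. destruct (Nat.ltb_spec i m); [auto|lia].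
  - simpl csum at 1. rewrite IHm by lia. replace (S m - 1)%nat with (S (m - 1)) by lia.
    rewrite csum_split_last. replace (sk k (m - 1)) with m. ring.
    unfold sk. destruct (Nat.ltb_spec (m - 1) k); lia.
Qed.

Lemma finite_choice {T : Type} (m : nat) (P : nat -> T -> Prop) (d : T) :
  (forall i, (i < m)%nat -> exists x, P i x) -> exists f : nat -> T, forall i, (i < m)%nat -> P i (f i).
Proof.
  induction m; intros H.
  - exists (fun _ => d). intros; lia.
  - destruct IHm as [f Hf]. intros; apply H; lia.
    destruct (H m ltac:(lia)) as [x Hx].
    exists (fun i => if Nat.eqb i m then x else f i). intros i Hi.
    destruct (Nat.eqb_spec i m). subst; auto. apply Hf; lia.
Qed.

Section Steinitz.
Variable R : (nat -> C) -> Prop.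
Hypothesis HR0 : R vzero.
Hypothesis HRc : forall a u v, R u -> R v -> R (vadd (vscale a u) v).

Lemma R_ext u v : (forall x, u x = v x) -> R u -> R v.
Proof. intros H Hu. replace v with u; auto. apply functional_extensionality; auto. Qed.

Lemma R_comb a b u v : R u -> R v -> R (fun x => Cplus (Cmult a (u x)) (Cmult b (v x))).
Proof.
  intros Hu Hv. apply R_ext with (vadd (vscale a u) (vadd (vscale b v) vzero)).
  intros x. unfold vadd, vscale, vzero. ring. apply HRc; auto.
Qed.

Lemma fsum_S c W m x : fsum c W (S m) x = Cplus (fsum c W m x) (Cmult (c m) (W m x)).
Proof. reflexivity. Qed.

Lemma steinitz_idx : forall n m (U W : nat -> nat -> C) (a : nat -> nat -> C),
  (forall c, R (fsum c W m) -> forall j, (j < m)%nat -> c j = RtoC 0) ->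
  (forall i, (i < m)%nat -> R (fun x => Cminus (W i x) (fsum (a i) U n x))) ->
  (m <= n)%nat.
Proof.
  induction n; intros m U W a Hind Hspan.
  - destruct m as [|m]. lia. exfalso.
    set (c := fun j => if Nat.eqb j 0 then RtoC 1 else RtoC 0).
    assert (HR : R (fsum c W (S m))).
    { apply R_ext with (fun x => Cminus (W O x) (fsum (a O) U 0 x)); [|apply Hspan; lia].
      intros x. unfold fsum, c. simpl csum at 1.
      rewrite (csum_ext _ (fun j => if Nat.eqb j 0 then (fun j => W j x) j else RtoC 0)).
      rewrite (csum_delta (fun j => W j x) 0 (S m)). simpl. ring.
      intros j _. destruct (Nat.eqb j 0); ring. }
    specialize (Hind c HR 0%nat ltac:(lia)). unfold c in Hind. simpl in Hind.
    injection Hind. lra.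
  - destruct (classic (exists k, (k < m)%nat /\ a k n <> RtoC 0)) as [[k [Hk Hak]]|Hno].
    + set (t := fun i => Cdiv (a (sk k i) n) (a k n)).
      set (W' := fun i x => Cminus (W (sk k i) x) (Cmult (t i) (W k x))).
      set (a' := fun i j => Cminus (a (sk k i) j) (Cmult (t i) (a k j))).
      assert (Hsk : forall i, (i < m - 1)%nat -> (sk k i < m)%nat /\ sk k i <> k).
      { intros i Hi. unfold sk. destruct (Nat.ltb_spec i k); lia. }
      cut (m - 1 <= n)%nat. lia.
      apply (IHn (m - 1)%nat U W' a').
      * intros d HRd j Hj.
        set (c := fun j => if Nat.eqb j k then Copp (csum (fun i => Cmult (d i) (t i)) (m - 1))
                           else if Nat.ltb j k then d j else d (j - 1)%nat).
        assert (HRc' : R (fsum c W m)).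
        { apply R_ext with (fsum d W' (m - 1)); auto. intros x. unfold fsum.
          rewrite (csum_skip (fun j => Cmult (c j) (W j x)) m k Hk).
          unfold c at 1. rewrite Nat.eqb_refl.
          rewrite (csum_ext (fun i => Cmult (c (sk k i)) (W (sk k i) x)) (fun i => Cmult (d i) (W (sk k i) x))).
          unfold W'. rewrite (csum_ext (fun j => Cmult (d j) (Cminus (W (sk k j) x) (Cmult (t j) (W k x))))
                              (fun j => Cminus (Cmult (d j) (W (sk k j) x)) (Cmult (W k x) (Cmult (d j) (t j)))))
                       by (intros; ring).
          rewrite csum_minus, csum_scal. ring.
          intros i Hi. f_equal. unfold c, sk. destruct (Nat.ltb_spec i k).
          destruct (Nat.eqb_spec i k); [lia|]. destruct (Nat.ltb_spec i k); [auto|lia].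
          destruct (Nat.eqb_spec (S i) k); [lia|]. destruct (Nat.ltb_spec (S i) k); [lia|]. f_equal. lia. }
        pose proof (Hind c HRc' (sk k j) ltac:(apply Hsk; auto)) as Hc.
        unfold c, sk in Hc. destruct (Nat.ltb_spec j k).
        -- destruct (Nat.eqb_spec j k); [lia|]. destruct (Nat.ltb_spec j k); [auto|lia].
        -- destruct (Nat.eqb_spec (S j) k); [lia|]. destruct (Nat.ltb_spec (S j) k); [lia|].
           replace (S j - 1)%nat with j in Hc by lia. auto.
      * intros i Hi. destruct (Hsk i Hi) as [Hski Hskk].
        pose proof (Hspan (sk k i) Hski) as H1. pose proof (Hspan k Hk) as H2.
        apply R_ext with (fun x => Cplus (Cmult (RtoC 1) (Cminus (W (sk k i) x) (fsum (a (sk k i)) U (S n) x)))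
                                         (Cmult (Copp (t i)) (Cminus (W k x) (fsum (a k) U (S n) x)))).
        2: apply R_comb; auto.
        intros x. rewrite !fsum_S. unfold W', a', fsum.
        rewrite (csum_ext (fun j => Cmult (Cminus (a (sk k i) j) (Cmult (t i) (a k j))) (U j x))
                          (fun j => Cminus (Cmult (a (sk k i) j) (U j x)) (Cmult (t i) (Cmult (a k j) (U j x)))))
          by (intros; ring).
        rewrite csum_minus, csum_scal.
        assert (Ht : Cmult (t i) (a k n) = a (sk k i) n) by (unfold t; field; auto).
        match goal with |- _ = ?V => transitivity (Cminus V (Cmult (Cminus (a (sk k i) n) (Cmult (t i) (a k n))) (U n x))) end.
        ring. rewrite Ht. ring.
    + assert (Hz : forall i, (i < m)%nat -> a i n = RtoC 0).
      { intros i Hi. destruct (Ceq_dec (a i n) (RtoC 0)); auto. exfalso. apply Hno. exists i; auto. }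
      cut (m <= n)%nat. lia.
      apply (IHn m U W a Hind). intros i Hi.
      apply R_ext with (fun x => Cminus (W i x) (fsum (a i) U (S n) x)); [|apply Hspan; auto].
      intros x. rewrite fsum_S, Hz by auto. ring.
Qed.

Lemma lincomb_fsum cs ws : length cs = length ws ->
  forall x, lincomb cs ws x = fsum (fun j => nth j cs (RtoC 0)) (fun j => nth j ws vzero) (length ws) x.
Proof.
  revert cs. induction ws as [|w ws IH]; intros cs Hl x.
  - destruct cs; [|discriminate]. simpl. unfold vzero, fsum. reflexivity.
  - destruct cs as [|c cs]; [discriminate|]. simpl in Hl. injection Hl as Hl.
    simpl lincomb. unfold vadd, vscale. rewrite IH by auto. unfold fsum. simpl length.
    rewrite csum_shift0. simpl. ring.
Qed.

Lemma steinitz_list (us ws : list (nat -> C)) :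
  (forall cs, length cs = length ws -> R (lincomb cs ws) -> List.Forall (fun c => c = RtoC 0) cs) ->
  (forall w, In w ws -> exists cs, length cs = length us /\ R (vsub w (lincomb cs us))) ->
  (length ws <= length us)%nat.
Proof.
  intros Hind Hspan.
  set (m := length ws). set (n := length us).
  destruct (finite_choice m (fun i cs => length cs = n /\ R (vsub (nth i ws vzero) (lincomb cs us))) nil) as [f Hf].
  { intros i Hi. apply Hspan. apply nth_In. auto. }
  apply (steinitz_idx n m (fun j => nth j us vzero) (fun j => nth j ws vzero) (fun i j => nth j (f i) (RtoC 0))).
  - intros c Hc j Hj.
    set (cs := map c (seq 0 m)).
    assert (Hl : length cs = m) by (unfold cs; rewrite length_map, length_seq; auto).
    assert (HR : R (lincomb cs ws)).
    { apply R_ext with (fsum c (fun j => nth j ws vzero) m); auto. intros x. rewrite lincomb_fsum by auto.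
      unfold fsum. fold m. apply csum_ext. intros k Hk. unfold cs.
      rewrite nth_indep with (d' := c 0%nat) by (rewrite length_map, length_seq; auto).
      rewrite map_nth, seq_nth by auto. reflexivity. }
    specialize (Hind cs Hl HR). rewrite List.Forall_forall in Hind.
    replace (c j) with (nth j cs (RtoC 0)). apply Hind. apply nth_In. lia.
    unfold cs. rewrite nth_indep with (d' := c 0%nat) by (rewrite length_map, length_seq; auto).
    rewrite map_nth, seq_nth by auto. reflexivity.
  - intros i Hi. destruct (Hf i Hi) as [Hl HR].
    apply R_ext with (vsub (nth i ws vzero) (lincomb (f i) us)); auto.
    intros x. unfold vsub. rewrite lincomb_fsum by auto. reflexivity.
Qed.

End Steinitz.

Section Fred.
Variable A : Op.
Hypothesis HA2 : forall v, l2 v -> l2 (A v).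
Hypothesis HAlin : forall a u v, A (vadd (vscale a u) v) = vadd (vscale a (A u)) (A v).

Lemma A_vzero : A vzero = vzero.
Proof.
  pose proof (HAlin (RtoC (-1)) vzero vzero) as H.
  assert (E : vadd (vscale (RtoC (-1)) vzero) vzero = vzero).
  { apply functional_extensionality. intros i. unfold vadd, vscale, vzero. ring. }
  rewrite E in H. apply functional_extensionality. intros i.
  apply (f_equal (fun f => f i)) in H. unfold vadd, vscale, vzero in *. rewrite H. ring.
Qed.

Lemma range_R0 : in_range A vzero.
Proof. exists vzero. split. apply l2_vzero. symmetry. apply A_vzero. Qed.

Lemma range_Rc : forall a u v, in_range A u -> in_range A v -> in_range A (vadd (vscale a u) v).
Proof.
  intros a u v [x [Hx Ex]] [y [Hy Ey]]. exists (vadd (vscale a x) y). split.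
  apply l2_add; auto. apply l2_scale; auto. rewrite HAlin. subst. reflexivity.
Qed.

Lemma zero_R0 : vzero = vzero.
Proof. reflexivity. Qed.

Lemma zero_Rc : forall a u v, u = vzero -> v = vzero -> vadd (vscale a u) v = vzero.
Proof.
  intros a u v Hu Hv. subst. apply functional_extensionality. intros i. unfold vadd, vscale, vzero. ring.
Qed.

Lemma vsub_self w : vsub w w = vzero.
Proof. apply functional_extensionality. intros i. unfold vsub, vzero. ring. Qed.

Lemma dimker_le m d : dim_ker A m -> dim_ker A d -> (m <= d)%nat.
Proof.
  intros [ws [Hl [HF [Hind _]]]] [es [Hle [_ [_ Hspan]]]].
  rewrite <- Hl, <- Hle. apply (steinitz_list (fun x => x = vzero) zero_R0 zero_Rc).
  - intros cs Hcs H. apply Hind; auto. rewrite Hl in Hcs. auto.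
  - intros w Hw. rewrite List.Forall_forall in HF. destruct (HF w Hw) as [Hw2 Hw0].
    destruct (Hspan w Hw2 Hw0) as [cs [Hcs E]]. exists cs. split. rewrite Hle; auto.
    rewrite <- E. apply vsub_self.
Qed.

Lemma codim_le n d : codim_range A n -> codim_range A d -> (n <= d)%nat.
Proof.
  intros [ws [Hl [HF [Hind _]]]] [es [Hle [_ [_ Hspan]]]].
  rewrite <- Hl, <- Hle. apply (steinitz_list (in_range A) range_R0 range_Rc).
  - intros cs Hcs H. apply Hind; auto. rewrite Hl in Hcs. auto.
  - intros w Hw. rewrite List.Forall_forall in HF. pose proof (HF w Hw) as Hw2.
    destruct (Hspan w Hw2) as [v [cs [Hv [Hcs E]]]]. exists cs. split. rewrite Hle; auto.
    exists v. split; auto. rewrite E. apply functional_extensionality. intros i. unfold vsub, vadd. ring.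
Qed.

Lemma fred_index0 d : closed_range A -> dim_ker A d -> codim_range A d ->
  fredholm A /\ forall k, fredholm_index A k -> k = 0%Z.
Proof.
  intros Hcl Hk Hc. split.
  - split; auto. split; eexists; eauto.
  - intros k [_ [m [n [Hm [Hn E]]]]].
    assert (m = d) by (apply Nat.le_antisymm; [apply dimker_le|apply dimker_le]; auto).
    assert (n = d) by (apply Nat.le_antisymm; [apply codim_le|apply codim_le]; auto).
    subst. lia.
Qed.

End Fred.

Lemma not_essential A z : fredholm (shift_op A z) -> (forall k, fredholm_index (shift_op A z) k -> k = 0%Z) ->
  ~ essential_spectrum A z.
Proof.
  intros Hf Hk [_ [H|[_ [k [Hk' Hne]]]]]. auto. apply Hne. apply Hk; auto.
Qed.

Lemma lincomb_map_seq (F : nat -> nat -> C) cs s n x : length cs = n ->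
  lincomb cs (map F (seq s n)) x = csum (fun j => Cmult (nth j cs (RtoC 0)) (F (s + j)%nat x)) n.
Proof.
  intros Hl. rewrite lincomb_fsum by (rewrite length_map, length_seq; auto).
  rewrite length_map, length_seq. unfold fsum. apply csum_ext. intros j Hj.
  f_equal. rewrite nth_indep with (d' := F s) by (rewrite length_map, length_seq; auto).
  rewrite map_nth, seq_nth by auto. reflexivity.
Qed.

Lemma Forall_nth_zero (cs : list C) : (forall j, (j < length cs)%nat -> nth j cs (RtoC 0) = RtoC 0) ->
  List.Forall (fun c => c = RtoC 0) cs.
Proof.
  intros H. apply List.Forall_forall. intros c Hc. apply In_nth with (d := RtoC 0) in Hc.
  destruct Hc as [j [Hj E]]. rewrite <- E. apply H; auto.
Qed.

Definition dlt (a i : nat) : C := if Nat.eqb i a then RtoC 1 else RtoC 0.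

Lemma csum_dlt (c : nat -> C) n x :
  csum (fun j => Cmult (c j) (dlt j x)) n = if Nat.ltb x n then c x else RtoC 0.
Proof.
  rewrite (csum_ext _ (fun j => if Nat.eqb j x then c j else RtoC 0)).
  apply csum_delta. intros j _. unfold dlt. destruct (Nat.eqb_spec x j); destruct (Nat.eqb_spec j x); subst; try lia; ring.
Qed.

Lemma dlt_l2 a : l2 (dlt a).
Proof. apply (l2_finite _ (S a)). intros i Hi. unfold dlt. destruct (Nat.eqb_spec i a); [lia|auto]. Qed.

Lemma l2norm_sym u w : l2norm (vsub u w) = l2norm (vsub w u).
Proof.
  unfold l2norm. f_equal. apply Series_ext. intros n. unfold vsub.
  replace (Cminus (u n) (w n)) with (Copp (Cminus (w n) (u n))) by ring. rewrite Cmod_opp. auto.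
Qed.

Lemma lim_le_zero (a : R) (b : nat -> R) : (forall k, a <= b k) -> is_lim_seq b 0 -> a <= 0.
Proof.
  intros H Hb. assert (Rbar_le a 0). { apply is_lim_seq_le with (fun _ => a) b; auto. apply is_lim_seq_const. }
  simpl in H0. auto.
Qed.

Lemma root_lt1 z r : r <> RtoC 0 -> Cmod r <= 1 -> Cminus (RtoC 2) z = Cplus r (Cinv r) ->
  ~ (Im z = 0 /\ 0 <= Re z <= 4) -> Cmod r < 1.
Proof.
  intros Hr0 Hr1 Hz Hn. destruct (Req_dec (Cmod r) 1). exfalso. apply Hn. apply (root_unit_interval z r); auto. lra.
Qed.

Lemma nth_map_seq (f : nat -> C) n j d : (j < n)%nat -> nth j (map f (seq 0 n)) d = f j.
Proof.
  intros Hj. rewrite nth_indep with (d' := f 0%nat) by (rewrite length_map, length_seq; auto).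
  rewrite map_nth, seq_nth by auto. reflexivity.
Qed.

Section PCase.
Variable p : nat.
Hypothesis Hp : (5 <= p)%nat.
Definition zp : C := RtoC (INR p).

Lemma zp_not_interval : ~ (Im zp = 0 /\ 0 <= Re zp <= 4).
Proof.
  unfold zp. simpl. intros [_ [_ H]]. assert (INR 5 <= INR p) by (apply le_INR; auto). simpl in H0. lra.
Qed.

Lemma Aop_p_low v i : (i < p - 1)%nat -> Aop p zp v i = Copp (csum v p).
Proof.
  intros Hi. rewrite Aop_eq, Lap_low by lia. destruct (Nat.eqb_spec i (p-1)); [lia|]. unfold zp. ring.
Qed.

Definition rangeP (w : nat -> C) : Prop := l2 w /\ forall i, (i < p - 1)%nat -> w i = w O.

Lemma range_p_char w : in_range (Aop p zp) w <-> rangeP w.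
Proof.
  destruct (root_exists zp) as [r [Hr0 [Hr1 Hz]]].
  pose proof (root_lt1 zp r Hr0 Hr1 Hz zp_not_interval) as Hr.
  split.
  - intros [v [Hv E]]. subst w. split. apply Aop_l2; auto. lia.
    intros i Hi. rewrite !Aop_p_low by lia. auto.
  - intros [Hw Hc].
    assert (Hr1' : RtoC 1 <> r) by (intros E; rewrite <- E, Cmod_1 in Hr; lra).
    set (T := Copp (w O)).
    set (al := Cdiv (Cplus (Cminus (w (p - 1)%nat) (w O)) (QS r (fpath p w) 1)) (Cminus (RtoC 1) r)).
    set (u := fun _ : nat => Cdiv (Cminus T al) (RtoC (INR (p - 1)))).
    assert (Hq : RtoC (INR (p - 1)) <> RtoC 0) by (intros E; injection E; intros E'; apply (not_0_INR (p-1)); auto; lia).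
    assert (Hcs : Cplus (csum u (p - 1)) al = T).
    { unfold u. rewrite csum_const. field. auto. }
    exists (build p r u al w). split. apply build_l2; auto.
    apply functional_extensionality. intros i.
    destruct (Nat.lt_ge_cases i (p - 1)).
    + rewrite A_build_low by auto. rewrite Hcs. unfold zp. unfold T. rewrite (Hc i H). ring.
    + destruct (Nat.eq_dec i (p - 1)).
      * subst i. rewrite A_build_q by auto. rewrite Hcs. unfold T, al, zp. rewrite RtoC_plus.
        field. intros E. apply Hr1'. apply Ceq_minus in E. auto.
      * symmetry. apply A_build_high; auto. lia.
Qed.

Lemma closed_p : closed_range (Aop p zp).
Proof.
  intros u w Hu Hw Hlim. apply range_p_char. split; auto. intros i Hi.
  apply Ceq_minus. apply Cmod_eq_0. apply Rle_antisym; [|apply Cmod_ge_0].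
  apply (lim_le_zero _ (fun k => 2 * l2norm (vsub (u k) w))).
  - intros k. destruct (proj1 (range_p_char (u k)) (Hu k)) as [Hl Hc].
    assert (Hd : l2 (vsub (u k) w)) by (apply l2_sub; auto).
    pose proof (Cmod_le_l2norm _ i Hd). pose proof (Cmod_le_l2norm _ O Hd). unfold vsub in *.
    replace (Cminus (w i) (w O)) with (Cminus (Cminus (u k O) (w O)) (Cminus (u k i) (w i))) by (rewrite (Hc i Hi); ring).
    eapply Rle_trans. apply Cmod_minus_le. lra.
  - replace (Finite 0) with (Rbar_mult 2 0) by (simpl; f_equal; ring). apply is_lim_seq_scal_l. auto.
Qed.

Definition EK : list (nat -> C) := map (fun j => vsub (dlt j) (dlt (p - 2))) (seq 0 (p - 2)).
Definition EC : list (nat -> C) := map dlt (seq 0 (p - 2)).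

Lemma kernel_supp v : (forall i, (p - 1 <= i)%nat -> v i = RtoC 0) -> csum v (p - 1) = RtoC 0 ->
  forall i, Aop p zp v i = RtoC 0.
Proof.
  intros Hs Hc i.
  assert (Hcp : csum v p = RtoC 0).
  { replace p with (S (p - 1)) by lia. rewrite csum_split_last, Hc, Hs by lia. ring. }
  rewrite Aop_eq. destruct (Nat.lt_ge_cases i p).
  - rewrite Lap_low by lia. rewrite Hcp. unfold zp.
    destruct (Nat.eqb_spec i (p - 1)). rewrite !Hs by lia. ring. ring.
  - rewrite Lap_high by lia. rewrite !Hs by lia. ring.
Qed.

Lemma EK_eval cs x : length cs = (p - 2)%nat ->
  lincomb cs EK x = Cminus (if Nat.ltb x (p - 2) then nth x cs (RtoC 0) else RtoC 0)
                           (if Nat.eqb x (p - 2) then csum (fun j => nth j cs (RtoC 0)) (p - 2) else RtoC 0).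
Proof.
  intros Hl. unfold EK. rewrite lincomb_map_seq by auto. simpl.
  unfold vsub. rewrite (csum_ext _ (fun j => Cminus (Cmult (nth j cs (RtoC 0)) (dlt j x))
                                        (Cmult (dlt (p - 2) x) (nth j cs (RtoC 0))))) by (intros; ring).
  rewrite csum_minus, csum_scal, csum_dlt. unfold dlt at 1. destruct (Nat.eqb x (p - 2)); ring.
Qed.

Lemma EC_eval cs x : length cs = (p - 2)%nat ->
  lincomb cs EC x = if Nat.ltb x (p - 2) then nth x cs (RtoC 0) else RtoC 0.
Proof. intros Hl. unfold EC. rewrite lincomb_map_seq by auto. simpl. apply csum_dlt. Qed.

Lemma dimker_p : dim_ker (Aop p zp) (p - 2).
Proof.
  destruct (root_exists zp) as [r [Hr0 [Hr1 Hz]]].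
  pose proof (root_lt1 zp r Hr0 Hr1 Hz zp_not_interval) as Hr.
  exists EK. split; [unfold EK; rewrite length_map, length_seq; auto|].
  split; [|split].
  - apply List.Forall_forall. intros w Hw. unfold EK in Hw. apply in_map_iff in Hw.
    destruct Hw as [j [E Hj]]. apply in_seq in Hj. subst w. split.
    apply l2_sub; apply dlt_l2.
    apply functional_extensionality. intros i. unfold vzero. apply kernel_supp.
    + intros k Hk. unfold vsub, dlt. destruct (Nat.eqb_spec k j); [lia|]. destruct (Nat.eqb_spec k (p-2)); [lia|]. ring.
    + unfold vsub. rewrite csum_minus.
      rewrite (csum_ext (dlt j) (fun k => if Nat.eqb k j then (fun _ => RtoC 1) k else RtoC 0)) by auto.
      rewrite (csum_ext (dlt (p-2)) (fun k => if Nat.eqb k (p-2) then (fun _ => RtoC 1) k else RtoC 0)) by auto.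
      rewrite !csum_delta. destruct (Nat.ltb_spec j (p-1)); [|lia]. destruct (Nat.ltb_spec (p-2) (p-1)); [|lia]. ring.
  - intros cs Hl H0. apply Forall_nth_zero. intros j Hj. rewrite Hl in Hj.
    apply (f_equal (fun f => f j)) in H0. rewrite EK_eval in H0 by auto.
    destruct (Nat.ltb_spec j (p - 2)); [|lia]. destruct (Nat.eqb_spec j (p-2)); [lia|].
    unfold vzero in H0. transitivity (Cminus (nth j cs (RtoC 0)) (RtoC 0)); [ring|exact H0].
  - intros v Hv HA.
    assert (HA' : forall i, Aop p zp v i = RtoC 0) by (intros; rewrite HA; auto).
    destruct (kernel_eqs p Hp zp r Hr0 Hr1 Hz v Hv HA') as [Hk [HT Hi]].
    assert (HT0 : csum v p = RtoC 0).
    { pose proof (Hi 0%nat ltac:(lia)). unfold zp in H. rewrite <- H. ring. }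
    assert (Hb : v (p - 1)%nat = RtoC 0).
    { rewrite HT0 in HT. unfold cc, zp in HT. rewrite RtoC_plus in HT.
      replace (Cminus (Cminus (Cplus (RtoC (INR p)) (RtoC 1)) (RtoC (INR p))) r) with (Cminus (RtoC 1) r) in HT by ring.
      symmetry in HT. apply Cmult_integral in HT. destruct HT as [E|E]; auto.
      exfalso. apply Ceq_minus in E. rewrite <- E, Cmod_1 in Hr. lra. }
    assert (Hpath : forall i, (p - 1 <= i)%nat -> v i = RtoC 0).
    { intros i Hi'. replace i with (p - 1 + (i - (p - 1)))%nat by lia. rewrite Hk, Hb. ring. }
    assert (Hsum : csum v (p - 2) = Copp (v (p - 2)%nat)).
    { replace p with (S (S (p - 2))) in HT0 by lia. rewrite !csum_split_last in HT0.
      replace (S (p - 2)) with (p - 1)%nat in HT0 by lia. rewrite Hb in HT0.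
      apply Ceq_minus. rewrite <- HT0. ring. }
    exists (map v (seq 0 (p - 2))). split. rewrite length_map, length_seq; auto.
    apply functional_extensionality. intros x. rewrite EK_eval by (rewrite length_map, length_seq; auto).
    assert (Hn : forall j, (j < p - 2)%nat -> nth j (map v (seq 0 (p - 2))) (RtoC 0) = v j).
    { intros j Hj. rewrite nth_indep with (d' := v 0%nat) by (rewrite length_map, length_seq; auto).
      rewrite map_nth, seq_nth by auto. reflexivity. }
    rewrite (csum_ext _ v _ Hn), Hsum.
    destruct (Nat.ltb_spec x (p - 2)); destruct (Nat.eqb_spec x (p - 2)); try lia.
    + rewrite Hn by auto. ring.
    + subst. ring.
    + rewrite Hpath by lia. ring.
Qed.

Lemma codim_p : codim_range (Aop p zp) (p - 2).
Proof.
  exists EC. split; [unfold EC; rewrite length_map, length_seq; auto|].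
  split; [|split].
  - apply List.Forall_forall. intros w Hw. unfold EC in Hw. apply in_map_iff in Hw.
    destruct Hw as [j [E _]]. subst. apply dlt_l2.
  - intros cs Hl HR. apply range_p_char in HR. destruct HR as [_ Hc].
    assert (H0 : lincomb cs EC O = RtoC 0).
    { rewrite <- (Hc (p - 2)%nat) by lia. rewrite EC_eval by auto. destruct (Nat.ltb_spec (p-2) (p-2)); [lia|auto]. }
    apply Forall_nth_zero. intros j Hj. rewrite Hl in Hj.
    pose proof (Hc j ltac:(lia)). rewrite H0, EC_eval in H by auto.
    destruct (Nat.ltb_spec j (p - 2)); [auto|lia].
  - intros x Hx.
    set (cs := map (fun j => Cminus (x j) (x (p - 2)%nat)) (seq 0 (p - 2))).
    assert (Hl : length cs = (p - 2)%nat) by (unfold cs; rewrite length_map, length_seq; auto).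
    assert (Hn : forall j, (j < p - 2)%nat -> nth j cs (RtoC 0) = Cminus (x j) (x (p - 2)%nat)).
    { intros j Hj. unfold cs. apply (nth_map_seq (fun j => Cminus (x j) (x (p - 2)%nat))). auto. }
    set (y := vsub x (lincomb cs EC)).
    assert (Hy : rangeP y).
    { split. apply l2_sub; auto. apply (l2_finite _ (p - 2)). intros i Hi. rewrite EC_eval by auto.
      destruct (Nat.ltb_spec i (p-2)); [lia|auto].
      assert (Hyi : forall i, (i < p - 1)%nat -> y i = x (p - 2)%nat).
      { intros i Hi. unfold y, vsub. rewrite EC_eval by auto.
        destruct (Nat.ltb_spec i (p - 2)). rewrite Hn by auto. ring. replace i with (p - 2)%nat by lia. ring. }
      intros i Hi. rewrite !Hyi by lia. auto. }
    apply range_p_char in Hy. destruct Hy as [v [Hv E]].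
    exists v, cs. split; auto. split; auto. rewrite <- E. apply functional_extensionality. intros i.
    unfold y, vsub, vadd. ring.
Qed.

Lemma p_not_essential : ~ essential_spectrum (Lap p) zp.
Proof.
  destruct (fred_index0 (Aop p zp) (Aop_linear p zp) (p - 2)
             closed_p dimker_p codim_p) as [H1 H2].
  apply not_essential; auto.
Qed.

End PCase.

Lemma CSer_real (b : nat -> R) : CSer (fun m => RtoC (b m)) = RtoC (Series b).
Proof.
  unfold CSer. apply c_proj_eq; simpl. reflexivity.
  rewrite (Series_ext (fun _ => 0) (fun n => 0 * (/2)^n)) by (intros; ring).
  rewrite Series_scal_l. ring.
Qed.

Section LCase.
Variable p : nat.
Hypothesis Hp : (5 <= p)%nat.

Let z := zl p.
Let r := rl p.

Lemma Hr0' : r <> RtoC 0. Proof. apply rl_nz; auto. Qed.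
Lemma Hr1' : Cmod r < 1. Proof. apply rl_lt1; auto. Qed.
Lemma Hz' : Cminus (RtoC 2) z = Cplus r (Cinv r). Proof. apply rl_root; auto. Qed.
Lemma Hpz' : Cminus (RtoC (INR p)) z <> RtoC 0.
Proof. intros E. apply (zl_neq_p p Hp). apply Ceq_minus in E. auto. Qed.
Lemma HD' : DeltaP p z r = RtoC 0. Proof. apply Delta_zl; auto. Qed.
Lemma H1z : Cminus (RtoC 1) z <> RtoC 0.
Proof.
  unfold z, zl. intros E. rewrite <- RtoC_minus in E. injection E. intros E'.
  pose proof (lamstar_bounds p Hp). pose proof (Pr_ge5 p Hp). lra.
Qed.

Definition comp (w : nat -> C) : C :=
  Cplus (csum w (p - 1)) (Cmult (Cminus (RtoC 1) z) (Cplus (w (p - 1)%nat) (QS r (fpath p w) 1))).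

Lemma comp_lin a u v : l2 u -> l2 v -> comp (vadd (vscale a u) v) = Cplus (Cmult a (comp u)) (comp v).
Proof.
  intros Hu Hv. unfold comp. rewrite csum_lin, fpath_lin, QS_lin; auto.
  unfold vadd, vscale. ring. apply Hr1'. apply l2_fpath; auto. apply l2_fpath; auto.
Qed.

Definition Kc : R := INR (p - 1) + Cmod (Cminus (RtoC 1) z) * (1 + 2 * s r / (1 - s r)).

Lemma comp_bound w : l2 w -> Cmod (comp w) <= Kc * l2norm w.
Proof.
  intros Hw. unfold comp, Kc. eapply Rle_trans. apply Cmod_triangle. rewrite Cmod_mult.
  assert (H1 : Cmod (csum w (p - 1)) <= INR (p - 1) * l2norm w).
  { apply Cmod_csum_le. intros; apply Cmod_le_l2norm; auto. }
  pose proof (Cmod_le_l2norm w (p - 1) Hw).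
  pose proof (QS1_bound r (fpath p w) Hr1' (l2_fpath p w Hw)).
  assert (l2norm (fpath p w) <= l2norm w) by (unfold l2norm; apply sqrt_le_1_alt; apply S2_fpath; auto).
  pose proof (s_bounds r Hr1').
  assert (Hk : 0 <= 2 * s r / (1 - s r)) by (apply Rmult_le_pos; [lra|apply Rlt_le, Rinv_0_lt_compat; lra]).
  assert (Cmod (Cplus (w (p - 1)%nat) (QS r (fpath p w) 1)) <= (1 + 2 * s r / (1 - s r)) * l2norm w).
  { eapply Rle_trans. apply Cmod_triangle.
    assert (2 * s r / (1 - s r) * l2norm (fpath p w) <= 2 * s r / (1 - s r) * l2norm w) by (apply Rmult_le_compat_l; auto).
    lra. }
  pose proof (Cmod_ge_0 (Cminus (RtoC 1) z)).
  assert (Cmod (Cminus (RtoC 1) z) * Cmod (Cplus (w (p - 1)%nat) (QS r (fpath p w) 1)) <=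
          Cmod (Cminus (RtoC 1) z) * ((1 + 2 * s r / (1 - s r)) * l2norm w)) by (apply Rmult_le_compat_l; auto).
  nra.
Qed.

Lemma range_l_char w : in_range (Aop p z) w <-> (l2 w /\ comp w = RtoC 0).
Proof.
  pose proof Hr0' as Hr0. pose proof Hr1' as Hr1. pose proof Hz' as Hz. pose proof Hpz' as Hpz.
  pose proof HD' as HD. pose proof H1z as H1.
  split.
  - intros [v [Hv E]]. subst w. split. apply Aop_l2; auto. lia.
    set (b := v (p - 1)%nat).
    set (y := vsub v (build p r (fun _ => RtoC 0) b (Aop p z v))).
    assert (Hwl : l2 (Aop p z v)) by (apply Aop_l2; auto; lia).
    assert (Hy : l2 y) by (apply l2_sub; auto; apply build_l2; auto).
    assert (HA : forall i, (p <= i)%nat -> Aop p z y i = RtoC 0).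
    { intros i Hi. unfold y. rewrite Aop_sub. rewrite A_build_high; auto. ring. }
    pose proof (kernel_path p z r y Hp Hr0 ltac:(lra) Hz Hy HA 1) as Hk1.
    assert (Hyq : y (p - 1)%nat = RtoC 0).
    { unfold y, vsub. replace (build p r (fun _ => RtoC 0) b (Aop p z v) (p - 1)%nat)
        with (build p r (fun _ => RtoC 0) b (Aop p z v) (p - 1 + 0)%nat) by (f_equal; lia).
      rewrite build_path by lia. simpl QS. simpl Cpow. unfold b. ring. }
    rewrite Hyq, Cmult_0_r in Hk1. unfold y, vsub in Hk1. rewrite build_path in Hk1 by lia.
    apply Ceq_minus in Hk1. replace (p - 1 + 1)%nat with p in Hk1 by lia.
    set (Q1 := QS r (fpath p (Aop p z v)) 1) in *.
    set (T := csum v p).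
    assert (Eq : Aop p z v (p - 1)%nat = Cminus (Cminus (Cmult (Cminus (RtoC (INR p + 1)) z) b) T) (Cplus Q1 (Cmult b r))).
    { rewrite Aop_eq, Lap_low by lia. destruct (Nat.eqb_spec (p-1) (p-1)); [|lia]. rewrite Hk1.
      fold b T. rewrite RtoC_plus. simpl. ring. }
    assert (Ei : forall i, (i < p - 1)%nat -> Aop p z v i = Cminus (Cmult (Cminus (RtoC (INR p)) z) (v i)) T).
    { intros i Hi. rewrite Aop_eq, Lap_low by lia. destruct (Nat.eqb_spec i (p-1)); [lia|]. fold T. ring. }
    assert (EW : csum (Aop p z v) (p - 1) = Cminus (Cmult (Cminus (RtoC (INR p)) z) (csum v (p - 1))) (Cmult (RtoC (INR (p - 1))) T)).
    { rewrite (csum_ext _ (fun i => Cminus (Cmult (Cminus (RtoC (INR p)) z) (v i)) T)) by auto.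
      rewrite csum_minus, csum_scal, csum_const. reflexivity. }
    assert (ET : T = Cplus (csum v (p - 1)) b).
    { unfold T, b. replace p with (S (p - 1)) at 1 by lia. reflexivity. }
    unfold comp. rewrite EW, Eq. fold Q1.
    replace (csum v (p - 1)) with (Cminus T b) by (rewrite ET; ring).
    rewrite INR_pm1 by lia. rewrite RtoC_minus.
    unfold DeltaP, Pr in HD. rewrite RtoC_plus in *.
    transitivity (Cmult b (Cminus (Cmult (Cminus (RtoC 1) z) (Cminus (Cminus (Cplus (RtoC (INR p)) (RtoC 1)) z) r))
                           (Cminus (RtoC (INR p)) z))).
    ring. rewrite HD. ring.
  - intros [Hw Hc].
    set (Q1 := QS r (fpath p w) 1).
    set (T := Copp (Cplus (w (p - 1)%nat) Q1)).
    set (u := fun i => Cdiv (Cplus (w i) T) (Cminus (RtoC (INR p)) z)).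
    assert (Hcs : csum u (p - 1) = T).
    { unfold u. rewrite (csum_ext _ (fun i => Cmult (Cinv (Cminus (RtoC (INR p)) z)) (Cplus (w i) T))) by (intros; unfold Cdiv; ring).
      rewrite csum_scal, csum_plus, csum_const.
      unfold comp in Hc. fold Q1 in Hc.
      assert (EW : csum w (p - 1) = Cmult (Cminus (RtoC 1) z) T).
      { unfold T. apply Ceq_minus. rewrite <- Hc. ring. }
      rewrite EW, INR_pm1 by lia. rewrite RtoC_minus. field. auto. }
    exists (build p r u (RtoC 0) w). split. apply build_l2; auto.
    apply functional_extensionality. intros i.
    destruct (Nat.lt_ge_cases i (p - 1)).
    + rewrite A_build_low by auto. rewrite Hcs. unfold u. field. auto.
    + destruct (Nat.eq_dec i (p - 1)).
      * subst i. rewrite A_build_q by auto. rewrite Hcs. fold Q1. unfold T. ring.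
      * symmetry. apply A_build_high; auto. lia.
Qed.

Lemma closed_l : closed_range (Aop p z).
Proof.
  intros u w Hu Hw Hlim. apply range_l_char. split; auto.
  apply Cmod_eq_0. apply Rle_antisym; [|apply Cmod_ge_0].
  apply (lim_le_zero _ (fun k => Kc * l2norm (vsub (u k) w))).
  - intros k. destruct (proj1 (range_l_char (u k)) (Hu k)) as [Hl Hc].
    assert (E : comp w = comp (vadd (vscale (RtoC (-1)) (u k)) w)).
    { rewrite comp_lin, Hc by auto. ring. }
    rewrite E. rewrite l2norm_sym.
    replace (vsub w (u k)) with (vadd (vscale (RtoC (-1)) (u k)) w).
    apply comp_bound. apply l2_add; auto. apply l2_scale; auto.
    apply functional_extensionality. intros i. unfold vsub, vadd, vscale. ring.
  - replace (Finite 0) with (Rbar_mult Kc 0) by (simpl; f_equal; ring). apply is_lim_seq_scal_l. auto.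
Qed.

Lemma phi_path k : phi p (p - 1 + k)%nat = Cpow r k.
Proof. unfold phi. rewrite build_path by lia. rewrite QS_vzero. fold r. ring. Qed.

Lemma phi_low i : (i < p - 1)%nat -> phi p i = kap p.
Proof. intros. unfold phi. rewrite build_low; auto. Qed.

Lemma kap_eq : kap p = Cinv (Cminus (RtoC 1) z).
Proof.
  pose proof HD' as HD. pose proof Hpz' as Hpz. pose proof H1z as H1.
  unfold kap, cc, DeltaP, Pr in *. fold z r. rewrite RtoC_plus in *.
  apply (Cmult_eq_reg_l (Cmult (Cminus (RtoC 1) z) (Cminus (RtoC (INR p)) z))).
  2: { intros E. apply Cmult_integral in E. tauto. }
  transitivity (Cplus (Cminus (Cmult (Cminus (RtoC 1) z) (Cminus (Cminus (Cplus (RtoC (INR p)) (RtoC 1)) z) r))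
                              (Cminus (RtoC (INR p)) z)) (Cminus (RtoC (INR p)) z)).
  field. auto. rewrite HD. field. auto.
Qed.

Lemma comp_phi_nz : comp (phi p) <> RtoC 0.
Proof.
  pose proof H1z as H1.
  set (rho := rm p). set (L := lamS p).
  assert (Hrho : Rabs (rho ^ 2) < 1).
  { pose proof (rm_bounds p Hp). pose proof (rm_gt_m1 p Hp). rewrite Rabs_pos_eq by nra. unfold rho. nra. }
  assert (Hg : gS r (fpath p (phi p)) 0 = RtoC (rho * / (1 - rho ^ 2))).
  { unfold gS. rewrite (CSer_ext _ (fun m => RtoC (rho * (rho ^ 2) ^ m))).
    rewrite CSer_real. rewrite Series_scal_l, Series_geom_val; auto.
    intros m. unfold fpath. replace (p + (0 + m))%nat with (p - 1 + S m)%nat by lia.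
    rewrite phi_path. unfold r, rl. fold rho. rewrite <- !RtoC_pow, <- RtoC_mult. f_equal.
    rewrite <- pow_mult, <- pow_add. replace (m + S m)%nat with (S (2 * m)) by lia. simpl. ring. }
  assert (E : Cmult (Cminus (RtoC 1) z) (comp (phi p)) =
              RtoC (INR (p - 1) + (1 - L) * (1 - L) * (1 + rho * (rho * / (1 - rho ^ 2))))).
  { unfold comp. rewrite (csum_ext _ (fun _ => kap p)) by (intros; apply phi_low; auto).
    rewrite csum_const. replace (phi p (p - 1)%nat) with (phi p (p - 1 + 0)%nat) by (f_equal; lia).
    rewrite phi_path. simpl QS. rewrite Hg, kap_eq.
    transitivity (Cplus (RtoC (INR (p - 1))) (Cmult (Cmult (Cminus (RtoC 1) z) (Cminus (RtoC 1) z))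
                    (Cplus (RtoC 1) (Cmult r (RtoC (rho * / (1 - rho ^ 2))))))).
    simpl Cpow. field. auto.
    unfold z, zl, r, rl. fold L rho. apply c_proj_eq; simpl; ring. }
  intros Hc. rewrite Hc, Cmult_0_r in E. injection E. intros E'.
  pose proof (pos_INR (p - 1)).
  assert (0 < 1 - rho ^ 2) by (rewrite Rabs_pos_eq in Hrho by apply pow2_ge_0; lra).
  assert (0 <= rho * (rho * / (1 - rho ^ 2))).
  { replace (rho * (rho * / (1 - rho ^ 2))) with (rho ^ 2 * / (1 - rho ^ 2)) by ring.
    apply Rmult_le_pos. apply pow2_ge_0. apply Rlt_le, Rinv_0_lt_compat; auto. }
  assert (0 < (1 - L) * (1 - L)).
  { pose proof (lamstar_bounds p Hp). pose proof (Pr_ge5 p Hp). unfold L. nra. }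
  set (X := rho * (rho * / (1 - rho ^ 2))) in *. set (Y := (1 - L) * (1 - L)) in *.
  assert (0 <= Y * X) by (apply Rmult_le_pos; lra).
  assert (Hx : rho * (rho * / (1 - rho * (rho * 1))) = X) by (unfold X; simpl; ring).
  rewrite Hx in E'. replace (Y * (1 + X)) with (Y + Y * X) in E' by ring. lra.
Qed.

Lemma dimker_l : dim_ker (Aop p z) 1.
Proof.
  exists (phi p :: nil). split; auto. split; [|split].
  - constructor; [|constructor]. split. apply phi_l2; auto.
    apply functional_extensionality. intros i. apply phi_eigen; auto.
  - intros cs Hl H0. destruct cs as [|c [|]]; try discriminate.
    constructor; [|constructor]. apply (f_equal (fun f => f (p - 1)%nat)) in H0.
    simpl in H0. unfold vadd, vscale, vzero in H0. rewrite phi_q in H0 by auto.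
    rewrite <- H0. ring.
  - intros v Hv HA.
    assert (HA' : forall i, Aop p z v i = RtoC 0) by (intros; rewrite HA; auto).
    destruct (kernel_eqs p Hp z r Hr0' ltac:(pose proof Hr1'; lra) Hz' v Hv HA') as [Hk [HT Hi]].
    exists (v (p - 1)%nat :: nil). split; auto.
    apply functional_extensionality. intros i. simpl. unfold vadd, vscale, vzero.
    destruct (Nat.lt_ge_cases i (p - 1)).
    + rewrite phi_low by auto. pose proof (Hi i H) as Hvi. rewrite HT in Hvi.
      unfold kap. fold z r. apply (Cmult_eq_reg_l (Cminus (RtoC (INR p)) z)). 2: apply Hpz'.
      rewrite Hvi. field. apply Hpz'.
    + replace i with (p - 1 + (i - (p - 1)))%nat by lia. rewrite Hk, phi_path. ring.
Qed.

Lemma codim_l : codim_range (Aop p z) 1.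
Proof.
  pose proof comp_phi_nz as Hn.
  exists (phi p :: nil). split; auto. split; [|split].
  - constructor; [|constructor]. apply phi_l2; auto.
  - intros cs Hl HR. destruct cs as [|c [|]]; try discriminate.
    apply range_l_char in HR. destruct HR as [_ Hc]. simpl in Hc.
    replace (vadd (vscale c (phi p)) vzero) with (vadd (vscale c (phi p)) vzero) in Hc by reflexivity.
    rewrite comp_lin in Hc by (apply phi_l2 || apply l2_vzero; auto).
    assert (comp vzero = RtoC 0).
    { unfold comp. rewrite (csum_ext _ (fun _ => RtoC 0)) by auto. rewrite csum_zero, QS_vzero. unfold vzero. ring. }
    rewrite H, Cplus_0_r in Hc. constructor; [|constructor].
    apply Cmult_integral in Hc. destruct Hc; auto. contradiction.
  - intros x Hx.
    set (t := Cdiv (comp x) (comp (phi p))).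
    set (y := vadd (vscale (RtoC (-1) * t)%C (phi p)) x).
    assert (Hy : l2 y /\ comp y = RtoC 0).
    { split. apply l2_add; auto. apply l2_scale; apply phi_l2; auto.
      unfold y. rewrite comp_lin by (auto; apply phi_l2; auto). unfold t. field. auto. }
    apply range_l_char in Hy. destruct Hy as [v [Hv E]].
    exists v, (t :: nil). split; auto. split; auto. rewrite <- E. apply functional_extensionality. intros i.
    unfold y. simpl. unfold vadd, vscale, vzero. ring.
Qed.

Lemma l_not_essential : ~ essential_spectrum (Lap p) z.
Proof.
  destruct (fred_index0 (Aop p z) (Aop_linear p z) 1 closed_l dimker_l codim_l) as [H1 H2].
  apply not_essential; auto.
Qed.

End LCase.

Lemma spectrum_char p (hp : (5 <= p)%nat) (z : C) :
  spectrum (Lap p) z <-> ((Im z = 0 /\ 0 <= Re z <= 4) \/ z = RtoC (lamS p) \/ z = RtoC (INR p)).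
Proof.
  split.
  - intros Hs. destruct (classic (Im z = 0 /\ 0 <= Re z <= 4)) as [Hi|Hi]; [left; auto|right].
    destruct (Ceq_dec z (RtoC (lamS p))) as [E|E]; [left; auto|right].
    destruct (Ceq_dec z (RtoC (INR p))) as [E'|E']; [auto|exfalso].
    destruct (root_exists z) as [r [Hr0 [Hr1 Hz]]].
    pose proof (root_lt1 z r Hr0 Hr1 Hz Hi) as Hr.
    apply Hs. apply (resolvent p hp z r Hr0 Hr Hz E').
    intros HD. apply E. apply (Delta_root p hp z r Hr0 Hr Hz HD).
  - intros [Hi|[E|E]].
    + destruct Hi as [Hi1 Hi2]. destruct (interval_root z Hi1 Hi2) as [r [Hr0 [Hr1 Hz]]].
      apply (not_invertible p hp z r Hr0 Hr1 Hz).
    + subst z. apply (eigen_not_inv p _ (phi p) (phi_l2 p hp) (phi_nz p hp) (phi_eigen p hp)).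
    + subst z. apply (eigen_not_inv p _ e01 e01_l2 e01_nz (e01_eigen p hp)).
Qed.

Theorem proposition6 (p : nat) (hp : (5 <= p)%nat) :
  bounded_op (Lap p) /\
  exists lamstar : R, INR p < lamstar < INR p + 2 /\
    (forall z : C, spectrum (Lap p) z <->
       ((Im z = 0 /\ 0 <= Re z <= 4) \/ z = RtoC lamstar \/ z = RtoC (INR p))) /\
    (forall z : C, essential_spectrum (Lap p) z <-> (Im z = 0 /\ 0 <= Re z <= 4)) /\
    (forall z : C, point_spectrum (Lap p) z <-> (z = RtoC lamstar \/ z = RtoC (INR p))).
Proof.
  split. apply Lap_bounded. lia.
  exists (lamS p). split. apply lamstar_bounds; auto.
  split; [|split].
  - intros z. apply spectrum_char; auto.
  - intros z. split.
    + intros Hes. pose proof (proj1 Hes) as Hs. apply spectrum_char in Hs; auto.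
      destruct Hs as [Hi|[E|E]]; auto; exfalso.
      * subst z. apply (l_not_essential p hp). exact Hes.
      * subst z. apply (p_not_essential p hp). exact Hes.
    + intros Hi. split. apply spectrum_char; auto.
      left. intros [Hcl _]. destruct Hi as [Hi1 Hi2].
      destruct (interval_root z Hi1 Hi2) as [r [Hr0 [Hr1 Hz]]].
      apply (not_closed p hp z r Hr0 Hr1 Hz). exact Hcl.
  - intros z. apply point_spec_char; auto.
Qed.
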